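(* The following equalities hold: \[ \hat R^+=R^+,\qquad \hat S^+=S^+,\qquad \hat R^-=R^-,\qquad \hat S^-=S^- . \]
   Context: $G$ is an unbounded multiply connected region of connectivity $m$ with $\infty\in G$ and $0\in G$. Its boundary is $\Gamma=\Gamma_1\cup\dots\cup\Gamma_m$, consisting of simple, non-intersecting, smooth, clockwise oriented closed curves. $G^-:=(\mathbb C\cup\{\infty\})\setminus(G\cup\Gamma)$ is the union of the bounded simply connected regions $G_k$ enclosed by $\Gamma_k$. Each $\Gamma_k$ is parametrized by a $2\pi$-periodic, twice continuously differentiable function $\eta_k$ with $\dot\eta_k\ne0$. $J$ is the disjoint union of $J_k=[0,2\pi]$, and $\eta=\eta_k$ on $J_k$. $H$ is the space of real functions on $J$ that are Hölder continuous and $2\pi$-periodic on each $J_k$. Functions on boundaries are identified with functions on $J$ via the parametrization. $A$ is a nonvanishing complex function on $\Gamma$ with continuously differentiable parametric form on $J$. Fix $z_0\in G_m$ and let $\Psi(z)=1/(z-z_0)$, $\hat G=\Psi(G)$ (bounded), $\hat G^-=\Psi(G^-)$ (unbounded), $\hat\Gamma=\Psi(\Gamma)$ with parametrization $\zeta(s)=1/(\eta(s)-z_0)$, and $\hat A(s)=\zeta(s)A(s)$. Analytic functions are continuous up to the boundary; boundary values are taken from the indicated region. The spaces are defined as follows: \[ \begin{aligned} R^+&=\{\gamma\in H:\gamma=\operatorname{Re}[Af^+],\ f \text{ analytic in } G,\ f(\infty)=0\},\\ S^+&=\{\gamma\in H:\gamma=Af^+,\ f \text{ analytic in } G,\ f(\infty)=0\},\\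 R^-&=\{\gamma\in H:\gamma=\operatorname{Re}[Ag^-],\ g \text{ analytic in } G^-\},\\ S^-&=\{\gamma\in H:\gamma=Ag^-,\ g \text{ analytic in } G^-\},\\ \hat R^+&=\{\gamma\in H:\gamma=\operatorname{Re}[\hat A\hat f^+],\ \hat f \text{ analytic in } \hat G\},\\ \hat S^+&=\{\gamma\in H:\gamma=\hat A\hat f^+,\ \hat f \text{ analytic in } \hat G\},\\ \hat R^-&=\{\gamma\in H:\gamma=\operatorname{Re}[\hat A\hat g^-],\ \hat g \text{ analytic in } \hat G^-,\ \hat g(\infty)=0\},\\ \hat S^-&=\{\gamma\in H:\gamma=\hat A\hat g^-,\ \hat g \text{ analytic in } \hat G^-,\ \hat g(\infty)=0\}. \end{aligned} \] In the definitions of the $S$-spaces, the function $Af^+$ (resp. $Ag^-$, $\hat A\hat f^+$, $\hat A\hat g^-$) is required to be real. *)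

(* Defs.v *)
From Stdlib Require Import Reals.
From Coquelicot Require Import Coquelicot.
Open Scope R_scope.

Definition C_holo_at (f : C -> C) (z : C) : Prop :=
  exists l : C, @is_derive C_AbsRing C_NormedModule f z l.

Definition C_holo_on (D : C -> Prop) (f : C -> C) : Prop :=
  forall z, D z -> C_holo_at f z.

(* analyticity at infinity with value [v] at infinity:
   w |-> f(1/w) (with value v at w = 0) is complex differentiable at 0 *)
Definition C_holo_at_infty (f : C -> C) (v : C) : Prop :=
  C_holo_at (fun w => if Ceq_dec w 0 then v else f (Cinv w)) 0.

Definition C_open (D : C -> Prop) : Prop := @open C_UniformSpace D.

Definition C_connected (S : C -> Prop) : Prop :=
  forall U V : C -> Prop, C_open U -> C_open V ->
    (forall z, S z -> U z \/ V z) ->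
    (exists z, S z /\ U z) -> (exists z, S z /\ V z) ->
    exists z, S z /\ U z /\ V z.

Definition C_closure (D : C -> Prop) (z : C) : Prop :=
  forall eps, 0 < eps -> exists w, D w /\ Cmod (Cminus w z) < eps.

Definition C_bounded (D : C -> Prop) : Prop :=
  exists r, forall z, D z -> Cmod z <= r.

(* the connected component of z in the set D is bounded *)
Definition bounded_component (D : C -> Prop) (z : C) : Prop :=
  D z /\ exists r, forall S, C_connected S -> (forall w, S w -> D w) -> S z ->
     forall w, S w -> Cmod w <= r.

(* f, restricted to D, extends continuously to the point p, the boundary value
   at p being f p ("continuous up to the boundary, values taken from D") *)
Definition cont_from (D : C -> Prop) (f : C -> C) (p : C) : Prop :=
  filterlim f (within D (@locally C_UniformSpace p)) (@locally C_UniformSpace (f p)).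

Definition periodic2pi {T} (u : R -> T) : Prop := forall t, u (t + 2 * PI) = u t.

Definition C1_real (u : R -> R) : Prop :=
  (forall t, ex_derive u t) /\ (forall t, continuous (Derive u) t).
Definition C2_real (u : R -> R) : Prop :=
  (forall t, ex_derive u t) /\ (forall t, ex_derive (Derive u) t) /\
  (forall t, continuous (Derive_n u 2) t).

Definition C1_curve (u : R -> C) : Prop :=
  C1_real (fun t => Re (u t)) /\ C1_real (fun t => Im (u t)).
Definition C2_curve (u : R -> C) : Prop :=
  C2_real (fun t => Re (u t)) /\ C2_real (fun t => Im (u t)).
Definition dcurve (u : R -> C) (t : R) : C :=
  (Derive (fun s => Re (u s)) t, Derive (fun s => Im (u s)) t).

Definition winding (u : R -> C) (z : C) : R :=
  / (2 * PI) * RInt (fun t => Im (Cdiv (dcurve u t) (Cminus (u t) z))) 0 (2 * PI).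

Definition holder_02pi (u : R -> R) : Prop :=
  exists alpha K, 0 < alpha <= 1 /\ 0 <= K /\
    forall s t, 0 <= s <= 2 * PI -> 0 <= t <= 2 * PI -> s <> t ->
      Rabs (u s - u t) <= K * Rpower (Rabs (s - t)) alpha.

(** Functions on J = disjoint union of J_k, k < m, are
    represented as [nat -> R -> _] (only k < m matters); they are 2 pi-periodic
    functions on R, identified with their restriction to J_k = [0, 2 pi]. *)

Definition Gamma_k (eta : nat -> R -> C) (k : nat) (z : C) : Prop :=
  exists t, eta k t = z.
Definition Gamma (m : nat) (eta : nat -> R -> C) (z : C) : Prop :=
  exists k, (k < m)%nat /\ Gamma_k eta k z.
Definition inside (eta : nat -> R -> C) (k : nat) (z : C) : Prop :=
  bounded_component (fun w => ~ Gamma_k eta k w) z.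

Definition Gminus (m : nat) (eta : nat -> R -> C) (G : C -> Prop) (z : C) : Prop :=
  ~ G z /\ ~ Gamma m eta z.

Definition setting (m : nat) (eta : nat -> R -> C) (G : C -> Prop) : Prop :=
  (1 <= m)%nat /\
  (forall k, (k < m)%nat -> periodic2pi (eta k) /\ C2_curve (eta k) /\
      forall t, dcurve (eta k) t <> 0%C) /\
  (forall k s t, (k < m)%nat -> 0 <= s < 2 * PI -> 0 <= t < 2 * PI ->
      eta k s = eta k t -> s = t) /\
  (forall k l s t, (k < m)%nat -> (l < m)%nat -> k <> l -> eta k s <> eta l t) /\
  C_open G /\ C_connected G /\ G 0%C /\
  (exists r, forall z, r < Cmod z -> G z) /\
  (forall z, (C_closure G z /\ ~ G z) <-> Gamma m eta z) /\
  (forall z, Gminus m eta G z <-> exists k, (k < m)%nat /\ inside eta k z) /\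
  (forall k z, (k < m)%nat -> inside eta k z -> winding (eta k) z = -1).

Definition in_H (m : nat) (gam : nat -> R -> R) : Prop :=
  forall k, (k < m)%nat -> periodic2pi (gam k) /\ holder_02pi (gam k).

Definition analytic_G_plus (m : nat) (eta : nat -> R -> C) (G : C -> Prop)
  (f : C -> C) : Prop :=
  C_holo_on G f /\ C_holo_at_infty f 0%C /\
  forall p, Gamma m eta p -> cont_from G f p.

Definition analytic_G_minus (m : nat) (eta : nat -> R -> C) (G : C -> Prop)
  (g : C -> C) : Prop :=
  C_holo_on (Gminus m eta G) g /\
  forall p, Gamma m eta p -> cont_from (Gminus m eta G) g p.

Definition Rplus_sp m eta G (A : nat -> R -> C) (gam : nat -> R -> R) : Prop :=
  in_H m gam /\ exists f, analytic_G_plus m eta G f /\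
    forall k s, (k < m)%nat -> gam k s = Re (Cmult (A k s) (f (eta k s))).
Definition Splus_sp m eta G (A : nat -> R -> C) (gam : nat -> R -> R) : Prop :=
  in_H m gam /\ exists f, analytic_G_plus m eta G f /\
    forall k s, (k < m)%nat -> RtoC (gam k s) = Cmult (A k s) (f (eta k s)).
Definition Rminus_sp m eta G (A : nat -> R -> C) (gam : nat -> R -> R) : Prop :=
  in_H m gam /\ exists g, analytic_G_minus m eta G g /\
    forall k s, (k < m)%nat -> gam k s = Re (Cmult (A k s) (g (eta k s))).
Definition Sminus_sp m eta G (A : nat -> R -> C) (gam : nat -> R -> R) : Prop :=
  in_H m gam /\ exists g, analytic_G_minus m eta G g /\
    forall k s, (k < m)%nat -> RtoC (gam k s) = Cmult (A k s) (g (eta k s)).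

Definition Psi (z0 z : C) : C := Cinv (Cminus z z0).

(* hat G = Psi(G), with Psi(infinity) = 0 *)
Definition Ghat (z0 : C) (G : C -> Prop) (w : C) : Prop :=
  w = 0%C \/ exists z, G z /\ w = Psi z0 z.
(* hat G^- = Psi(G^-) minus the point Psi(z0) = infinity *)
Definition Gminushat m eta (z0 : C) (G : C -> Prop) (w : C) : Prop :=
  exists z, Gminus m eta G z /\ z <> z0 /\ w = Psi z0 z.
Definition Gammahat m eta (z0 : C) (w : C) : Prop :=
  exists z, Gamma m eta z /\ w = Psi z0 z.
Definition zeta (z0 : C) (eta : nat -> R -> C) (k : nat) (s : R) : C :=
  Psi z0 (eta k s).
Definition Ahat (z0 : C) (eta : nat -> R -> C) (A : nat -> R -> C) k s : C :=
  Cmult (zeta z0 eta k s) (A k s).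

Definition analytic_Ghat_plus m eta z0 G (f : C -> C) : Prop :=
  C_holo_on (Ghat z0 G) f /\
  forall p, Gammahat m eta z0 p -> cont_from (Ghat z0 G) f p.
Definition analytic_Ghat_minus m eta z0 G (g : C -> C) : Prop :=
  C_holo_on (Gminushat m eta z0 G) g /\ C_holo_at_infty g 0%C /\
  forall p, Gammahat m eta z0 p -> cont_from (Gminushat m eta z0 G) g p.

Definition Rplushat_sp m eta G z0 (A : nat -> R -> C) (gam : nat -> R -> R) : Prop :=
  in_H m gam /\ exists f, analytic_Ghat_plus m eta z0 G f /\
    forall k s, (k < m)%nat ->
      gam k s = Re (Cmult (Ahat z0 eta A k s) (f (zeta z0 eta k s))).
Definition Splushat_sp m eta G z0 (A : nat -> R -> C) (gam : nat -> R -> R) : Prop :=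
  in_H m gam /\ exists f, analytic_Ghat_plus m eta z0 G f /\
    forall k s, (k < m)%nat ->
      RtoC (gam k s) = Cmult (Ahat z0 eta A k s) (f (zeta z0 eta k s)).
Definition Rminushat_sp m eta G z0 (A : nat -> R -> C) (gam : nat -> R -> R) : Prop :=
  in_H m gam /\ exists g, analytic_Ghat_minus m eta z0 G g /\
    forall k s, (k < m)%nat ->
      gam k s = Re (Cmult (Ahat z0 eta A k s) (g (zeta z0 eta k s))).
Definition Sminushat_sp m eta G z0 (A : nat -> R -> C) (gam : nat -> R -> R) : Prop :=
  in_H m gam /\ exists g, analytic_Ghat_minus m eta z0 G g /\
    forall k s, (k < m)%nat ->
      RtoC (gam k s) = Cmult (Ahat z0 eta A k s) (g (zeta z0 eta k s)).

(* Main.v *)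
Require Import Defs.
From Stdlib Require Import Reals Lra.
From Coquelicot Require Import Coquelicot.
Open Scope R_scope.

Lemma normCR (x : C) : @norm R_AbsRing C_R_NormedModule x = Cmod x.
Proof.
  unfold norm; simpl. unfold prod_norm, Cmod; simpl. unfold norm; simpl.
  unfold abs; simpl. rewrite !Rmult_1_r, <- !Rabs_mult, !Rabs_pos_eq by apply Rle_0_sqr. reflexivity.
Qed.

Lemma normC (x : C) : @norm C_AbsRing C_NormedModule x = Cmod x.
Proof. reflexivity. Qed.

Lemma loc_C (z : C) (P : C -> Prop) :
  @locally C_UniformSpace z P <-> exists d, 0 < d /\ forall w, Cmod (w - z) < d -> P w.
Proof.
  split.
  - intros [eps H]. exists eps. split; [apply cond_pos|]. intros w Hw.
    apply H. apply C_NormedModule_mixin_compat1. exact Hw.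
  - intros [d [Hd H]].
    assert (L := @locally_ball_norm C_AbsRing C_NormedModule z (mkposreal d Hd)).
    revert L. apply filter_imp. intros w Hw. apply H. exact Hw.
Qed.

Lemma loc_K (z : C) (P : C -> Prop) :
  @locally (AbsRing_UniformSpace C_AbsRing) z P <-> exists d, 0 < d /\ forall w, Cmod (w - z) < d -> P w.
Proof.
  split.
  - intros [eps H]. exists eps. split; [apply cond_pos|]. intros w Hw.
    apply H. exact Hw.
  - intros [d [Hd H]]. exists (mkposreal d Hd). intros w Hw. apply H. exact Hw.
Qed.

Definition CD (f : C -> C) (z l : C) : Prop :=
  forall eps, 0 < eps -> exists d, 0 < d /\ forall w, Cmod (w - z) < d ->
    Cmod (f w - f z - l * (w - z)) <= eps * Cmod (w - z).

Lemma is_derive_CD f z l :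
  @is_derive C_AbsRing C_NormedModule f z l <-> CD f z l.
Proof.
  split.
  - intros [_ H] eps Heps.
    assert (H1 := H z (fun P HP => HP) (mkposreal eps Heps)).
    apply loc_K in H1. destruct H1 as [d [Hd H1]]. exists d. split; auto.
    intros w Hw. specialize (H1 w Hw). rewrite (Cmult_comm l). exact H1.
  - intros H. split.
    + apply is_linear_scal_l.
    + intros x Hx. apply (@is_filter_lim_locally_unique C_AbsRing (AbsRing_NormedModule C_AbsRing)) in Hx. subst x.
      intros eps. apply loc_K. destruct (H eps (cond_pos eps)) as [d [Hd H1]].
      exists d. split; auto. intros w Hw. specialize (H1 w Hw).
      rewrite (Cmult_comm l) in H1. exact H1.
Qed.
Lemma Ceq (x y : C) : fst x = fst y -> snd x = snd y -> x = y.
Proof. intros; apply injective_projections; auto. Qed.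

Ltac Cring := apply Ceq; simpl; ring.

Lemma loc_R (x0 : R) (P : R -> Prop) :
  @locally R_UniformSpace x0 P <-> exists d, 0 < d /\ forall x, Rabs (x - x0) < d -> P x.
Proof.
  split.
  - intros [eps H]. exists eps. split; [apply cond_pos|]. intros w Hw.
    apply H. exact Hw.
  - intros [d [Hd H]]. exists (mkposreal d Hd). intros w Hw. apply H. exact Hw.
Qed.

Definition Ccont (f : C -> C) (z : C) : Prop :=
  forall eps, 0 < eps -> exists d, 0 < d /\ forall w, Cmod (w - z) < d -> Cmod (f w - f z) < eps.

Lemma Cmod_hor (x x0 y : R) : Cmod ((x, y) - (x0, y)) = Rabs (x - x0).
Proof.
  replace ((x, y) - (x0, y))%C with (RtoC (x - x0)) by Cring. apply Cmod_R.
Qed.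

Lemma Cmod_ver (x y y0 : R) : Cmod ((x, y) - (x, y0)) = Rabs (y - y0).
Proof.
  replace ((x, y) - (x, y0))%C with (Ci * RtoC (y - y0))%C by Cring.
  rewrite Cmod_mult, Cmod_Ci, Cmod_R. ring.
Qed.

Lemma cont_hor (f : C -> C) (x0 y : R) :
  Ccont f (x0, y) -> @continuous R_UniformSpace C_R_NormedModule (fun x => f (x, y)) x0.
Proof.
  intros H. unfold continuous.
  apply (proj2 (@filterlim_locally_ball_norm R_AbsRing _ C_R_NormedModule _ _ _ _)). intros eps.
  apply loc_R. destruct (H eps (cond_pos eps)) as [d [Hd H1]].
  exists d. split; auto. intros x Hx. unfold ball_norm. rewrite normCR.
  apply H1. rewrite Cmod_hor. exact Hx.
Qed.

Lemma cont_ver (f : C -> C) (x y0 : R) :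
  Ccont f (x, y0) -> @continuous R_UniformSpace C_R_NormedModule (fun y => f (x, y)) y0.
Proof.
  intros H. unfold continuous.
  apply (proj2 (@filterlim_locally_ball_norm R_AbsRing _ C_R_NormedModule _ _ _ _)). intros eps.
  apply loc_R. destruct (H eps (cond_pos eps)) as [d [Hd H1]].
  exists d. split; auto. intros y Hy. unfold ball_norm. rewrite normCR.
  apply H1. rewrite Cmod_ver. exact Hy.
Qed.

Definition CInt (f : R -> C) (a b : R) : C := @RInt C_R_CompleteNormedModule f a b.
Definition exC (f : R -> C) (a b : R) : Prop := @ex_RInt C_R_NormedModule f a b.

Lemma exC_cont (f : R -> C) a b :
  (forall x, Rmin a b <= x <= Rmax a b -> @continuous R_UniformSpace C_R_NormedModule f x) ->
  exC f a b.
Proof. intros H. exact (@ex_RInt_continuous C_R_CompleteNormedModule f a b H). Qed.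

Lemma CInt_plus f g a b : exC f a b -> exC g a b ->
  CInt (fun x => f x + g x)%C a b = (CInt f a b + CInt g a b)%C.
Proof. intros Hf Hg. unfold CInt. apply (@RInt_plus C_R_CompleteNormedModule); auto. Qed.

Lemma exC_plus f g a b : exC f a b -> exC g a b -> exC (fun x => f x + g x)%C a b.
Proof. intros Hf Hg. apply (@ex_RInt_plus C_R_NormedModule); auto. Qed.

Lemma is_RInt_C (f : R -> C) a b (l : C) :
  @is_RInt C_R_NormedModule f a b l <->
  (is_RInt (fun t => fst (f t)) a b (fst l) /\ is_RInt (fun t => snd (f t)) a b (snd l)).
Proof.
  split.
  - intros H. split.
    + apply (@is_RInt_fct_extend_fst R_NormedModule R_NormedModule f a b l H).
    + apply (@is_RInt_fct_extend_snd R_NormedModule R_NormedModule f a b l H).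
  - intros [H1 H2]. destruct l as [l1 l2].
    apply (@is_RInt_fct_extend_pair R_NormedModule R_NormedModule f a b l1 l2 H1 H2).
Qed.

Lemma is_RInt_mulc (f : R -> C) a b (l c : C) :
  @is_RInt C_R_NormedModule f a b l ->
  @is_RInt C_R_NormedModule (fun t => c * f t)%C a b (c * l)%C.
Proof.
  intros H. apply is_RInt_C in H. destruct H as [H1 H2]. apply is_RInt_C. simpl. split.
  - apply (@is_RInt_minus R_NormedModule).
    + apply (@is_RInt_scal R_NormedModule (fun t => fst (f t)) a b (fst c)). exact H1.
    + apply (@is_RInt_scal R_NormedModule (fun t => snd (f t)) a b (snd c)). exact H2.
  - apply (@is_RInt_plus R_NormedModule).
    + apply (@is_RInt_scal R_NormedModule (fun t => snd (f t)) a b (fst c)). exact H2.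
    + apply (@is_RInt_scal R_NormedModule (fun t => fst (f t)) a b (snd c)). exact H1.
Qed.

Lemma exC_mulc f a b c : exC f a b -> exC (fun t => c * f t)%C a b.
Proof.
  intros [l H]. exists (c * l)%C. apply is_RInt_mulc. exact H.
Qed.

Lemma CInt_mulc f a b c : exC f a b -> CInt (fun t => c * f t)%C a b = (c * CInt f a b)%C.
Proof.
  intros H. unfold CInt. apply (@is_RInt_unique C_R_CompleteNormedModule).
  apply is_RInt_mulc. apply (@RInt_correct C_R_CompleteNormedModule). exact H.
Qed.

Lemma CInt_ext f g a b : (forall x, Rmin a b <= x <= Rmax a b -> f x = g x) ->
  CInt f a b = CInt g a b.
Proof.
  intros H. unfold CInt. apply (@RInt_ext C_R_CompleteNormedModule).
  intros x Hx. apply H. lra.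
Qed.

Lemma exC_ext f g a b : (forall x, Rmin a b <= x <= Rmax a b -> f x = g x) ->
  exC f a b -> exC g a b.
Proof.
  intros H. apply (@ex_RInt_ext C_R_NormedModule). intros x Hx. apply H. lra.
Qed.

Lemma CInt_norm f a b M : a <= b -> exC f a b ->
  (forall x, a <= x <= b -> Cmod (f x) <= M) -> Cmod (CInt f a b) <= (b - a) * M.
Proof.
  intros Hab Hf HM. rewrite <- normCR. unfold CInt.
  apply (@norm_RInt_le_const C_R_NormedModule f a b); auto.
  - intros x Hx. rewrite normCR. auto.
  - apply (@RInt_correct C_R_CompleteNormedModule). exact Hf.
Qed.

Lemma CInt_Chasles f a b c : exC f a b -> exC f b c ->
  (CInt f a b + CInt f b c)%C = CInt f a c.
Proof.
  intros H1 H2. unfold CInt. apply (@RInt_Chasles C_R_CompleteNormedModule); auto.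
Qed.

Lemma CInt_fst f a b : exC f a b -> fst (CInt f a b) = RInt (fun t => fst (f t)) a b.
Proof.
  intros H. apply (@RInt_correct C_R_CompleteNormedModule) in H.
  apply is_RInt_C in H. destruct H as [H1 H2]. symmetry. apply is_RInt_unique. exact H1.
Qed.

Lemma CInt_snd f a b : exC f a b -> snd (CInt f a b) = RInt (fun t => snd (f t)) a b.
Proof.
  intros H. apply (@RInt_correct C_R_CompleteNormedModule) in H.
  apply is_RInt_C in H. destruct H as [H1 H2]. symmetry. apply is_RInt_unique. exact H2.
Qed.

Definition Ir (f : C -> C) (a b c d : R) : C :=
  (CInt (fun x => f (x, c)) a b + Ci * CInt (fun y => f (b, y)) c d
   - CInt (fun x => f (x, d)) a b - Ci * CInt (fun y => f (a, y)) c d)%C.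

Definition sides_ex (f : C -> C) (a b c d : R) : Prop :=
  exC (fun x => f (x, c)) a b /\ exC (fun y => f (b, y)) c d /\
  exC (fun x => f (x, d)) a b /\ exC (fun y => f (a, y)) c d.

Definition Ccont_rect (f : C -> C) (a b c d : R) : Prop :=
  forall x y, a <= x <= b -> c <= y <= d -> Ccont f (x, y).

Lemma exC_hor f a b y : a <= b -> (forall x, a <= x <= b -> Ccont f (x, y)) ->
  exC (fun x => f (x, y)) a b.
Proof.
  intros Hab H. apply exC_cont. intros x Hx. apply cont_hor. apply H.
  rewrite Rmin_left, Rmax_right in Hx; auto.
Qed.

Lemma exC_ver f c d x : c <= d -> (forall y, c <= y <= d -> Ccont f (x, y)) ->
  exC (fun y => f (x, y)) c d.
Proof.
  intros Hab H. apply exC_cont. intros y Hy. apply cont_ver. apply H.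
  rewrite Rmin_left, Rmax_right in Hy; auto.
Qed.

Lemma sides_of_cont f a b c d : a <= b -> c <= d -> Ccont_rect f a b c d -> sides_ex f a b c d.
Proof.
  intros Hab Hcd H. repeat split.
  - apply exC_hor; auto. intros; apply H; lra.
  - apply exC_ver; auto. intros; apply H; lra.
  - apply exC_hor; auto. intros; apply H; lra.
  - apply exC_ver; auto. intros; apply H; lra.
Qed.

Lemma Ir_splitx f a e b c d :
  exC (fun x => f (x, c)) a e -> exC (fun x => f (x, c)) e b ->
  exC (fun x => f (x, d)) a e -> exC (fun x => f (x, d)) e b ->
  Ir f a b c d = (Ir f a e c d + Ir f e b c d)%C.
Proof.
  intros H1 H2 H3 H4. unfold Ir.
  rewrite <- (CInt_Chasles _ a e b H1 H2), <- (CInt_Chasles _ a e b H3 H4). ring.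
Qed.

Lemma Ir_splity f a b c e d :
  exC (fun y => f (b, y)) c e -> exC (fun y => f (b, y)) e d ->
  exC (fun y => f (a, y)) c e -> exC (fun y => f (a, y)) e d ->
  Ir f a b c d = (Ir f a b c e + Ir f a b e d)%C.
Proof.
  intros H1 H2 H3 H4. unfold Ir.
  rewrite <- (CInt_Chasles _ c e d H1 H2), <- (CInt_Chasles _ c e d H3 H4). ring.
Qed.

Lemma Ir_plus f g a b c d : sides_ex f a b c d -> sides_ex g a b c d ->
  Ir (fun z => f z + g z)%C a b c d = (Ir f a b c d + Ir g a b c d)%C.
Proof.
  intros [F1 [F2 [F3 F4]]] [G1 [G2 [G3 G4]]]. unfold Ir.
  rewrite !(CInt_plus (fun x => f (x, _)) (fun x => g (x, _))) by auto.
  rewrite !(CInt_plus (fun y => f (_, y)) (fun y => g (_, y))) by auto.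
  ring.
Qed.

Lemma Ir_mulc f k a b c d : sides_ex f a b c d ->
  Ir (fun z => k * f z)%C a b c d = (k * Ir f a b c d)%C.
Proof.
  intros [F1 [F2 [F3 F4]]]. unfold Ir.
  rewrite !(CInt_mulc (fun x => f (x, _))) by auto.
  rewrite !(CInt_mulc (fun y => f (_, y))) by auto.
  ring.
Qed.

Lemma sides_plus f g a b c d : sides_ex f a b c d -> sides_ex g a b c d ->
  sides_ex (fun z => f z + g z)%C a b c d.
Proof.
  intros [F1 [F2 [F3 F4]]] [G1 [G2 [G3 G4]]]. repeat split; apply exC_plus; auto.
Qed.

Lemma sides_mulc f k a b c d : sides_ex f a b c d -> sides_ex (fun z => k * f z)%C a b c d.
Proof.
  intros [F1 [F2 [F3 F4]]]. repeat split; apply exC_mulc; auto.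
Qed.

Definition on_bd (a b c d : R) (z : C) : Prop :=
  (a <= fst z <= b /\ (snd z = c \/ snd z = d)) \/
  (c <= snd z <= d /\ (fst z = a \/ fst z = b)).

Lemma Ir_ext f g a b c d : a <= b -> c <= d ->
  (forall z, on_bd a b c d z -> f z = g z) -> Ir f a b c d = Ir g a b c d.
Proof.
  intros Hab Hcd H. unfold Ir.
  rewrite (CInt_ext (fun x => f (x, c)) (fun x => g (x, c))),
          (CInt_ext (fun x => f (x, d)) (fun x => g (x, d))),
          (CInt_ext (fun y => f (b, y)) (fun y => g (b, y))),
          (CInt_ext (fun y => f (a, y)) (fun y => g (a, y))); auto;
  intros t Ht; rewrite ?Rmin_left, ?Rmax_right in Ht by auto; apply H; unfold on_bd; simpl; tauto.
Qed.

Lemma sides_ext f g a b c d : a <= b -> c <= d ->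
  (forall z, on_bd a b c d z -> f z = g z) -> sides_ex f a b c d -> sides_ex g a b c d.
Proof.
  intros Hab Hcd H [F1 [F2 [F3 F4]]].
  refine (conj (exC_ext _ _ _ _ _ F1) (conj (exC_ext _ _ _ _ _ F2) (conj (exC_ext _ _ _ _ _ F3) (exC_ext _ _ _ _ _ F4))));
  intros t Ht; rewrite ?Rmin_left, ?Rmax_right in Ht by auto; apply H; unfold on_bd; simpl; tauto.
Qed.

Lemma Ir_bound f a b c d M : a <= b -> c <= d -> sides_ex f a b c d ->
  (forall z, on_bd a b c d z -> Cmod (f z) <= M) ->
  Cmod (Ir f a b c d) <= 2 * ((b - a) + (d - c)) * M.
Proof.
  intros Hab Hcd [F1 [F2 [F3 F4]]] H. unfold Ir.
  assert (B1 : Cmod (CInt (fun x => f (x, c)) a b) <= (b - a) * M).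
  { apply CInt_norm; auto. intros x Hx. apply H. unfold on_bd; simpl; tauto. }
  assert (B2 : Cmod (CInt (fun y => f (b, y)) c d) <= (d - c) * M).
  { apply CInt_norm; auto. intros x Hx. apply H. unfold on_bd; simpl; tauto. }
  assert (B3 : Cmod (CInt (fun x => f (x, d)) a b) <= (b - a) * M).
  { apply CInt_norm; auto. intros x Hx. apply H. unfold on_bd; simpl; tauto. }
  assert (B4 : Cmod (CInt (fun y => f (a, y)) c d) <= (d - c) * M).
  { apply CInt_norm; auto. intros x Hx. apply H. unfold on_bd; simpl; tauto. }
  set (I1 := CInt (fun x => f (x, c)) a b) in *.
  set (I2 := CInt (fun y => f (b, y)) c d) in *.
  set (I3 := CInt (fun x => f (x, d)) a b) in *.
  set (I4 := CInt (fun y => f (a, y)) c d) in *.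
  assert (T : forall u v : C, Cmod (u - v) <= Cmod u + Cmod v).
  { intros u v. unfold Cminus. eapply Rle_trans; [apply Cmod_triangle|]. rewrite Cmod_opp. lra. }
  assert (T2 : forall u : C, Cmod (Ci * u) = Cmod u).
  { intros u. rewrite Cmod_mult, Cmod_Ci. ring. }
  eapply Rle_trans; [apply T|]. rewrite T2.
  eapply Rle_trans; [apply Rplus_le_compat_r; apply T|].
  eapply Rle_trans; [apply Rplus_le_compat_r; apply Rplus_le_compat_r; apply Cmod_triangle|].
  rewrite T2. lra.
Qed.

Lemma Cmod_minus_sym (u v : C) : Cmod (u - v) = Cmod (v - u).
Proof. replace (u - v)%C with (- (v - u))%C by Cring. apply Cmod_opp. Qed.

Lemma CD_Ccont f z l : CD f z l -> Ccont f z.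
Proof.
  intros H eps Heps.
  destruct (H 1 Rlt_0_1) as [d [Hd H1]].
  exists (Rmin d (eps / (Cmod l + 2))). split.
  { apply Rmin_glb_lt; auto. apply Rdiv_lt_0_compat; auto.
    generalize (Cmod_ge_0 l); lra. }
  intros w Hw.
  assert (Hw1 : Cmod (w - z) < d) by (eapply Rlt_le_trans; [exact Hw| apply Rmin_l]).
  assert (Hw2 : Cmod (w - z) < eps / (Cmod l + 2)) by (eapply Rlt_le_trans; [exact Hw| apply Rmin_r]).
  specialize (H1 w Hw1).
  replace (f w - f z)%C with ((f w - f z - l * (w - z)) + l * (w - z))%C by ring.
  eapply Rle_lt_trans; [apply Cmod_triangle|]. rewrite Cmod_mult.
  assert (0 <= Cmod l) by apply Cmod_ge_0.
  assert (0 <= Cmod (w - z)) by apply Cmod_ge_0.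
  assert (Cmod (w - z) * (Cmod l + 2) < eps).
  { apply (Rmult_lt_compat_r (Cmod l + 2)) in Hw2; [|lra].
    replace (eps / (Cmod l + 2) * (Cmod l + 2)) with eps in Hw2 by (field; lra). lra. }
  nra.
Qed.

Lemma Ccont_mulc f k z : Ccont f z -> Ccont (fun w => k * f w)%C z.
Proof.
  intros H eps Heps.
  destruct (H (eps / (Cmod k + 1))) as [d [Hd H1]].
  { apply Rdiv_lt_0_compat; auto. generalize (Cmod_ge_0 k); lra. }
  exists d. split; auto. intros w Hw.
  replace (k * f w - k * f z)%C with (k * (f w - f z))%C by ring.
  rewrite Cmod_mult. specialize (H1 w Hw).
  assert (Hk : 0 <= Cmod k) by apply Cmod_ge_0.
  assert (Hk2 : Cmod k * (eps / (Cmod k + 1)) < eps).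
  { replace (Cmod k * (eps / (Cmod k + 1))) with (eps * (Cmod k / (Cmod k + 1))) by (field; lra).
    assert (Cmod k / (Cmod k + 1) < 1).
    { apply (Rmult_lt_reg_r (Cmod k + 1)); [lra|]. field_simplify; lra. }
    nra. }
  eapply Rle_lt_trans; [|exact Hk2]. apply Rmult_le_compat_l; lra.
Qed.

Lemma CD_hor F x0 y l : CD F (x0, y) l ->
  @is_derive R_AbsRing C_R_NormedModule (fun x => F (x, y)) x0 l.
Proof.
  intros H. split.
  - apply is_linear_scal_l.
  - intros x Hx. apply (@is_filter_lim_locally_unique R_AbsRing R_NormedModule) in Hx. subst x.
    intros eps. apply loc_R. destruct (H eps (cond_pos eps)) as [d [Hd H1]].
    exists d. split; auto. intros x Hx. rewrite <- (Cmod_hor x x0 y) in Hx.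
    specialize (H1 _ Hx). rewrite Cmod_hor in H1. rewrite normCR.
    eapply Rle_trans; [apply Req_le; apply (f_equal Cmod)|]; [|exact H1].
    apply Ceq; simpl; unfold scal, minus, plus, opp; simpl;
      unfold prod_plus, prod_opp, prod_scal; simpl; unfold mult, plus, opp; simpl; ring.
Qed.

Lemma CD_ver F x y0 l : CD F (x, y0) l ->
  @is_derive R_AbsRing C_R_NormedModule (fun y => F (x, y)) y0 (Ci * l)%C.
Proof.
  intros H. split.
  - apply is_linear_scal_l.
  - intros y Hy. apply (@is_filter_lim_locally_unique R_AbsRing R_NormedModule) in Hy. subst y.
    intros eps. apply loc_R. destruct (H eps (cond_pos eps)) as [d [Hd H1]].
    exists d. split; auto. intros y Hy. rewrite <- (Cmod_ver x y y0) in Hy.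
    specialize (H1 _ Hy). rewrite Cmod_ver in H1. rewrite normCR.
    eapply Rle_trans; [apply Req_le; apply (f_equal Cmod)|]; [|exact H1].
    apply Ceq; simpl; unfold scal, minus, plus, opp; simpl;
      unfold prod_plus, prod_opp, prod_scal; simpl; unfold mult, plus, opp; simpl; ring.
Qed.

Lemma Ir_exact (F F' : C -> C) a b c d : a <= b -> c <= d ->
  (forall x y, a <= x <= b -> c <= y <= d -> CD F (x, y) (F' (x, y))) ->
  Ccont_rect F' a b c d -> Ir F' a b c d = 0%C.
Proof.
  intros Hab Hcd HD HC.
  assert (Hh : forall y, c <= y <= d ->
    CInt (fun x => F' (x, y)) a b = (F (b, y) - F (a, y))%C).
  { intros y Hy. unfold CInt. apply (@is_RInt_unique C_R_CompleteNormedModule).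
    apply (@is_RInt_derive C_R_CompleteNormedModule (fun x => F (x, y))).
    - intros x Hx. rewrite Rmin_left, Rmax_right in Hx by auto. apply CD_hor. apply HD; auto.
    - intros x Hx. rewrite Rmin_left, Rmax_right in Hx by auto. apply cont_hor. apply HC; auto. }
  assert (Hv : forall x, a <= x <= b ->
    (Ci * CInt (fun y => F' (x, y)) c d)%C = (F (x, d) - F (x, c))%C).
  { intros x Hx. rewrite <- CInt_mulc by (apply exC_ver; auto; intros y Hy; apply HC; auto).
    unfold CInt. apply (@is_RInt_unique C_R_CompleteNormedModule).
    apply (@is_RInt_derive C_R_CompleteNormedModule (fun y => F (x, y))).
    - intros y Hy. rewrite Rmin_left, Rmax_right in Hy by auto. apply CD_ver. apply HD; auto.
    - intros y Hy. rewrite Rmin_left, Rmax_right in Hy by auto.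
      apply (cont_ver (fun z => Ci * F' z)%C). apply Ccont_mulc. apply HC; auto. }
  unfold Ir. rewrite !Hh, !Hv by lra. ring.
Qed.

Lemma Ccont_rect_sub f a b c d a' b' c' d' :
  a <= a' -> b' <= b -> c <= c' -> d' <= d -> Ccont_rect f a b c d -> Ccont_rect f a' b' c' d'.
Proof. intros H1 H2 H3 H4 H x y Hx Hy. apply H; lra. Qed.

Lemma quad f a b c d : a <= b -> c <= d -> Ccont_rect f a b c d ->
  Ir f a b c d =
  (Ir f a ((a+b)/2) c ((c+d)/2) + Ir f ((a+b)/2) b c ((c+d)/2) +
   Ir f a ((a+b)/2) ((c+d)/2) d + Ir f ((a+b)/2) b ((c+d)/2) d)%C.
Proof.
  intros Hab Hcd H.
  set (m := (a+b)/2). set (k := (c+d)/2).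
  assert (Hm : a <= m <= b) by (unfold m; lra).
  assert (Hk : c <= k <= d) by (unfold k; lra).
  assert (EH : forall y u v, c <= y <= d -> a <= u <= v -> v <= b -> exC (fun x => f (x, y)) u v).
  { intros y u v Hy Hu Hv. apply exC_hor; [lra|]. intros x Hx. apply H; lra. }
  assert (EV : forall x u v, a <= x <= b -> c <= u <= v -> v <= d -> exC (fun y => f (x, y)) u v).
  { intros x u v Hx Hu Hv. apply exC_ver; [lra|]. intros y Hy. apply H; lra. }
  rewrite (Ir_splitx f a m b c d) by (apply EH; lra).
  rewrite (Ir_splity f a m c k d) by (apply EV; lra).
  rewrite (Ir_splity f m b c k d) by (apply EV; lra).
  ring.
Qed.

Record Rect := mkRect { ra : R; rb : R; rc : R; rd : R }.

Definition IrR f (r : Rect) := Ir f (ra r) (rb r) (rc r) (rd r).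

Definition child1 r := mkRect (ra r) ((ra r + rb r)/2) (rc r) ((rc r + rd r)/2).
Definition child2 r := mkRect ((ra r + rb r)/2) (rb r) (rc r) ((rc r + rd r)/2).
Definition child3 r := mkRect (ra r) ((ra r + rb r)/2) ((rc r + rd r)/2) (rd r).
Definition child4 r := mkRect ((ra r + rb r)/2) (rb r) ((rc r + rd r)/2) (rd r).

Definition step f r : Rect :=
  if Rle_dec (Cmod (IrR f r) / 4) (Cmod (IrR f (child1 r))) then child1 r else
  if Rle_dec (Cmod (IrR f r) / 4) (Cmod (IrR f (child2 r))) then child2 r else
  if Rle_dec (Cmod (IrR f r) / 4) (Cmod (IrR f (child3 r))) then child3 r else child4 r.

Lemma step_prop f r : ra r <= rb r -> rc r <= rd r -> Ccont_rect f (ra r) (rb r) (rc r) (rd r) ->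
  Cmod (IrR f r) / 4 <= Cmod (IrR f (step f r)) /\
  ra r <= ra (step f r) /\ rb (step f r) <= rb r /\ rc r <= rc (step f r) /\ rd (step f r) <= rd r /\
  rb (step f r) - ra (step f r) = (rb r - ra r) / 2 /\
  rd (step f r) - rc (step f r) = (rd r - rc r) / 2.
Proof.
  intros Hab Hcd H.
  assert (Q := quad f _ _ _ _ Hab Hcd H).
  unfold step.
  destruct (Rle_dec _ _) as [H1|H1].
  { unfold child1; simpl. repeat split; auto; lra. }
  destruct (Rle_dec _ _) as [H2|H2].
  { unfold child2; simpl. repeat split; auto; lra. }
  destruct (Rle_dec _ _) as [H3|H3].
  { unfold child3; simpl. repeat split; auto; lra. }
  unfold child4; simpl. repeat split; try lra.
  apply Rnot_le_lt in H1, H2, H3.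
  unfold IrR, child1, child2, child3 in *; simpl in *.
  rewrite Q in H1, H2, H3 |- *.
  set (A1 := Ir f (ra r) ((ra r + rb r) / 2) (rc r) ((rc r + rd r) / 2)) in *.
  set (A2 := Ir f ((ra r + rb r) / 2) (rb r) (rc r) ((rc r + rd r) / 2)) in *.
  set (A3 := Ir f (ra r) ((ra r + rb r) / 2) ((rc r + rd r) / 2) (rd r)) in *.
  set (A4 := Ir f ((ra r + rb r) / 2) (rb r) ((rc r + rd r) / 2) (rd r)) in *.
  assert (T := Cmod_triangle (A1 + A2 + A3) A4).
  assert (T2 := Cmod_triangle (A1 + A2) A3).
  assert (T3 := Cmod_triangle A1 A2).
  lra.
Qed.

Lemma Cmod_le_sum (z : C) : Cmod z <= Rabs (fst z) + Rabs (snd z).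
Proof.
  unfold Cmod. rewrite <- (sqrt_Rsqr (Rabs (fst z) + Rabs (snd z))).
  2: { generalize (Rabs_pos (fst z)) (Rabs_pos (snd z)); lra. }
  apply sqrt_le_1_alt. unfold Rsqr.
  assert (E1 : fst z ^ 2 = Rabs (fst z) * Rabs (fst z)) by (rewrite <- Rabs_mult; simpl; rewrite Rmult_1_r, Rabs_pos_eq; [ring| apply Rle_0_sqr]).
  assert (E2 : snd z ^ 2 = Rabs (snd z) * Rabs (snd z)) by (rewrite <- Rabs_mult; simpl; rewrite Rmult_1_r, Rabs_pos_eq; [ring| apply Rle_0_sqr]).
  rewrite E1, E2. generalize (Rabs_pos (fst z)) (Rabs_pos (snd z)). nra.
Qed.

Lemma CD_quad (p q z : C) : CD (fun w => p * w + q * (w * w))%C z (p + (q + q) * z)%C.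
Proof.
  intros eps Heps. exists (eps / (Cmod q + 1)). split.
  { apply Rdiv_lt_0_compat; auto. generalize (Cmod_ge_0 q); lra. }
  intros w Hw.
  replace (p * w + q * (w * w) - (p * z + q * (z * z)) - (p + (q + q) * z) * (w - z))%C
    with (q * (w - z) * (w - z))%C by ring.
  rewrite !Cmod_mult.
  assert (0 <= Cmod q) by apply Cmod_ge_0.
  assert (0 <= Cmod (w - z)) by apply Cmod_ge_0.
  assert (Cmod q * Cmod (w - z) <= eps).
  { apply (Rmult_lt_compat_l (Cmod q + 1)) in Hw; [|lra].
    replace ((Cmod q + 1) * (eps / (Cmod q + 1))) with eps in Hw by (field; lra). nra. }
  nra.
Qed.

Section Goursat.
Variable f : C -> C.
Variables a b c d : R.
Hypothesis Hab : a <= b.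
Hypothesis Hcd : c <= d.
Hypothesis Hf : forall x y, a <= x <= b -> c <= y <= d -> exists l, CD f (x, y) l.

Let HC : Ccont_rect f a b c d.
Proof. intros x y Hx Hy. destruct (Hf x y Hx Hy) as [l Hl]. eapply CD_Ccont; eauto. Qed.

Let r0 := mkRect a b c d.
Let sq (n : nat) : Rect := Nat.iter n (step f) r0.

Let inv (n : nat) : Prop :=
  a <= ra (sq n) /\ ra (sq n) <= rb (sq n) /\ rb (sq n) <= b /\
  c <= rc (sq n) /\ rc (sq n) <= rd (sq n) /\ rd (sq n) <= d /\
  rb (sq n) - ra (sq n) = (b - a) / 2 ^ n /\ rd (sq n) - rc (sq n) = (d - c) / 2 ^ n /\
  Cmod (IrR f r0) / 4 ^ n <= Cmod (IrR f (sq n)).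

Let inv_all : forall n, inv n /\ (ra (sq n) <= ra (sq (S n)) /\ rb (sq (S n)) <= rb (sq n) /\
   rc (sq n) <= rc (sq (S n)) /\ rd (sq (S n)) <= rd (sq n)).
Proof.
  assert (IS : forall n, inv n -> inv (S n) /\ (ra (sq n) <= ra (sq (S n)) /\ rb (sq (S n)) <= rb (sq n) /\
   rc (sq n) <= rc (sq (S n)) /\ rd (sq (S n)) <= rd (sq n))).
  { intros n [I1 [I2 [I3 [I4 [I5 [I6 [I7 [I8 I9]]]]]]]].
    assert (HCn : Ccont_rect f (ra (sq n)) (rb (sq n)) (rc (sq n)) (rd (sq n))).
    { eapply Ccont_rect_sub; [| | | | exact HC]; auto. }
    destruct (step_prop f (sq n) I2 I5 HCn) as [P1 [P2 [P3 [P4 [P5 [P6 P7]]]]]].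
    change (sq (S n)) with (step f (sq n)).
    assert (0 < 2 ^ n) by (apply pow_lt; lra).
    assert (0 < 4 ^ n) by (apply pow_lt; lra).
    unfold inv. change (sq (S n)) with (step f (sq n)).
    repeat split; try lra.
    - rewrite P6, I7. simpl. field. lra.
    - rewrite P7, I8. simpl. field. lra.
    - simpl. apply Rle_trans with (Cmod (IrR f (sq n)) / 4); [|exact P1].
      replace (Cmod (IrR f r0) / (4 * 4 ^ n)) with ((Cmod (IrR f r0) / 4 ^ n) / 4) by (field; lra).
      lra. }
  assert (I0 : inv 0).
  { unfold inv, sq, r0; simpl. repeat split; try lra. }
  assert (Iall : forall n, inv n).
  { intros n. induction n; [exact I0| exact (proj1 (IS n IHn))]. }
  intros n. split; [apply Iall| exact (proj2 (IS n (Iall n)))].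
Qed.

Let inv_n n : inv n := proj1 (inv_all n).

Let mono_a : forall m n, (m <= n)%nat -> ra (sq m) <= ra (sq n) /\ rb (sq n) <= rb (sq m) /\
   rc (sq m) <= rc (sq n) /\ rd (sq n) <= rd (sq m).
Proof.
  intros m n Hmn. induction Hmn.
  - lra.
  - destruct (proj2 (inv_all m0)) as [M1 [M2 [M3 M4]]]. lra.
Qed.

Let ab_cross : forall m n, ra (sq m) <= rb (sq n) /\ rc (sq m) <= rd (sq n).
Proof.
  intros m n. destruct (Compare_dec.le_ge_dec m n) as [H|H].
  - destruct (mono_a m n H) as [M1 [M2 [M3 M4]]].
    destruct (inv_n n) as [I1 [I2 [I3 [I4 [I5 _]]]]]. lra.
  - destruct (mono_a n m H) as [M1 [M2 [M3 M4]]].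
    destruct (inv_n m) as [I1 [I2 [I3 [I4 [I5 _]]]]]. lra.
Qed.

Lemma goursat_aux : Ir f a b c d = 0%C.
Proof.
  destruct (Req_dec (Cmod (Ir f a b c d)) 0) as [E|E].
  { apply Cmod_eq_0. exact E. }
  exfalso.
  set (alpha := Cmod (Ir f a b c d)).
  assert (Halpha : 0 < alpha) by (generalize (Cmod_ge_0 (Ir f a b c d)); unfold alpha; lra).
  destruct (completeness (fun x => exists n, x = ra (sq n))) as [xs [Hxs1 Hxs2]].
  { exists b. intros x [n ->]. destruct (inv_n n) as [I1 [I2 [I3 _]]]. lra. }
  { exists (ra (sq 0)). exists 0%nat. reflexivity. }
  destruct (completeness (fun x => exists n, x = rc (sq n))) as [ys [Hys1 Hys2]].
  { exists d. intros x [n ->]. destruct (inv_n n) as [I1 [I2 [I3 [I4 [I5 [I6 _]]]]]]. lra. }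
  { exists (rc (sq 0)). exists 0%nat. reflexivity. }
  assert (Hx : forall n, ra (sq n) <= xs <= rb (sq n)).
  { intros n. split.
    - apply Hxs1. exists n. reflexivity.
    - apply Hxs2. intros x [m ->]. apply ab_cross. }
  assert (Hy : forall n, rc (sq n) <= ys <= rd (sq n)).
  { intros n. split.
    - apply Hys1. exists n. reflexivity.
    - apply Hys2. intros x [m ->]. apply ab_cross. }
  assert (Hxs : a <= xs <= b).
  { destruct (Hx 0%nat) as [X1 X2]. simpl in X1, X2. unfold r0 in *; simpl in *. lra. }
  assert (Hys : c <= ys <= d).
  { destruct (Hy 0%nat) as [X1 X2]. simpl in X1, X2. unfold r0 in *; simpl in *. lra. }
  destruct (Hf xs ys Hxs Hys) as [l Hl].
  set (L := (b - a) + (d - c)).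
  assert (HL : 0 <= L) by (unfold L; lra).
  set (eps := alpha / (2 * L * L + 1)).
  assert (Heps : 0 < eps) by (unfold eps; apply Rdiv_lt_0_compat; nra).
  destruct (Hl eps Heps) as [del [Hdel Hl2]].
  assert (Hn : exists n, L / 2 ^ n < del).
  { destruct (pow_lt_1_zero (/2)) with (y := del / (L + 1)) as [N HN].
    { rewrite Rabs_pos_eq; lra. }
    { apply Rdiv_lt_0_compat; lra. }
    exists N. specialize (HN N (Nat.le_refl N)).
    rewrite Rabs_pos_eq in HN by (apply pow_le; lra).
    rewrite pow_inv in HN. unfold Rdiv.
    assert (0 < 2 ^ N) by (apply pow_lt; lra).
    apply (Rmult_lt_compat_l (L + 1)) in HN; [|lra].
    replace ((L + 1) * (del / (L + 1))) with del in HN by (field; lra).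
    assert (0 < / 2 ^ N) by (apply Rinv_0_lt_compat; lra).
    nra. }
  destruct Hn as [n Hn].
  destruct (inv_n n) as [I1 [I2 [I3 [I4 [I5 [I6 [I7 [I8 I9]]]]]]]].
  set (an := ra (sq n)) in *. set (bn := rb (sq n)) in *.
  set (cn := rc (sq n)) in *. set (dn := rd (sq n)) in *.
  assert (Hxn := Hx n). assert (Hyn := Hy n). fold an bn cn dn in Hxn, Hyn.
  assert (P2 : 0 < 2 ^ n) by (apply pow_lt; lra).
  assert (P4 : 4 ^ n = 2 ^ n * 2 ^ n) by (rewrite <- Rpow_mult_distr; f_equal; lra).
  assert (Ln : (bn - an) + (dn - cn) = L / 2 ^ n) by (rewrite I7, I8; unfold L; field; lra).
  set (zs := (xs, ys) : C).
  set (q := (fst l / 2, snd l / 2) : C).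
  set (p := (f zs - l * zs)%C).
  set (Fp := fun w : C => (p + (q + q) * w)%C).
  set (g := fun w : C => (f w - Fp w)%C).
  assert (Hqq : (q + q)%C = l) by (apply Ceq; unfold q; simpl; field).
  assert (HCn : Ccont_rect f an bn cn dn).
  { eapply Ccont_rect_sub; [| | | | exact HC]; auto. }
  assert (HFp : Ccont_rect Fp an bn cn dn).
  { intros x y _ _. eapply CD_Ccont. unfold Fp.
    intros e He. exists 1. split; [lra|]. intros w _.
    replace (p + (q + q) * w - (p + (q + q) * (x, y)) - (q + q) * (w - (x, y)))%C with (RtoC 0) by ring.
    rewrite Cmod_R, Rabs_R0. generalize (Cmod_ge_0 (w - (x, y))). intros; nra. }
  assert (SF : sides_ex Fp an bn cn dn) by (apply sides_of_cont; auto).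
  assert (SG : sides_ex g an bn cn dn).
  { apply sides_of_cont; auto. intros x y Hx' Hy' e He.
    destruct (HCn x y Hx' Hy' (e/2)) as [d1 [Hd1 H1]]; [lra|].
    destruct (HFp x y Hx' Hy' (e/2)) as [d2 [Hd2 H2]]; [lra|].
    exists (Rmin d1 d2). split; [apply Rmin_glb_lt; auto|]. intros w Hw.
    unfold g. replace (f w - Fp w - (f (x, y) - Fp (x, y)))%C with ((f w - f (x,y)) - (Fp w - Fp (x,y)))%C by ring.
    eapply Rle_lt_trans; [unfold Cminus at 1; apply Cmod_triangle|]. rewrite Cmod_opp.
    assert (Cmod (f w - f (x, y)) < e/2) by (apply H1; eapply Rlt_le_trans; [exact Hw|apply Rmin_l]).
    assert (Cmod (Fp w - Fp (x, y)) < e/2) by (apply H2; eapply Rlt_le_trans; [exact Hw|apply Rmin_r]).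
    lra. }
  assert (Split : IrR f (sq n) = (Ir g an bn cn dn + Ir Fp an bn cn dn)%C).
  { unfold IrR. fold an bn cn dn. rewrite <- Ir_plus by auto.
    apply Ir_ext; auto. intros z _. unfold g. ring. }
  assert (Z : Ir Fp an bn cn dn = 0%C).
  { apply (Ir_exact (fun w => p * w + q * (w * w))%C Fp); auto.
    intros x y _ _. unfold Fp. apply CD_quad. }
  assert (Bd : Cmod (Ir g an bn cn dn) <= 2 * ((bn - an) + (dn - cn)) * (eps * (L / 2 ^ n))).
  { apply Ir_bound; auto. intros z Hz.
    assert (Hzs : Cmod (z - zs) <= L / 2 ^ n).
    { eapply Rle_trans; [apply Cmod_le_sum|]. rewrite <- Ln.
      assert (Zx : an <= fst z <= bn) by (destruct Hz as [[Hz1 Hz2]|[Hz1 [Hz2|Hz2]]]; lra).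
      assert (Zy : cn <= snd z <= dn) by (destruct Hz as [[Hz1 [Hz2|Hz2]]|[Hz1 Hz2]]; lra).
      assert (A1 : Rabs (fst (z - zs)%C) <= bn - an).
      { unfold zs; simpl. apply Rabs_le. lra. }
      assert (A2 : Rabs (snd (z - zs)%C) <= dn - cn).
      { unfold zs; simpl. apply Rabs_le. lra. }
      lra. }
    assert (Hz2 : Cmod (z - zs) < del) by lra.
    specialize (Hl2 z Hz2). unfold g, Fp.
    replace (f z - (p + (q + q) * z))%C with (f z - f zs - l * (z - zs))%C
      by (rewrite Hqq; unfold p; ring).
    eapply Rle_trans; [exact Hl2|]. apply Rmult_le_compat_l; [lra| exact Hzs]. }
  rewrite Ln in Bd.
  assert (Hmain : Cmod (IrR f (sq n)) <= 2 * eps * L * L / 4 ^ n).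
  { rewrite Split, Z, Cplus_0_r. eapply Rle_trans; [exact Bd|]. right. rewrite P4. field. lra. }
  assert (Hr0 : IrR f r0 = Ir f a b c d) by reflexivity.
  rewrite Hr0 in I9. fold alpha in I9.
  assert (P4' : 0 < 4 ^ n) by (rewrite P4; nra).
  assert (2 * eps * L * L < alpha).
  { unfold eps. apply (Rmult_lt_reg_r (2 * L * L + 1)); [nra|].
    replace (2 * (alpha / (2 * L * L + 1)) * L * L * (2 * L * L + 1)) with (alpha * (2 * L * L)) by (field; nra).
    nra. }
  assert (alpha / 4 ^ n <= 2 * eps * L * L / 4 ^ n) by lra.
  apply (Rmult_le_compat_r (4 ^ n)) in H0; [|lra].
  replace (alpha / 4 ^ n * 4 ^ n) with alpha in H0 by (field; lra).
  replace (2 * eps * L * L / 4 ^ n * 4 ^ n) with (2 * eps * L * L) in H0 by (field; lra).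
  lra.
Qed.

End Goursat.

Lemma goursat f a b c d : a <= b -> c <= d ->
  (forall x y, a <= x <= b -> c <= y <= d -> exists l, CD f (x, y) l) ->
  Ir f a b c d = 0%C.
Proof. intros; apply goursat_aux; auto. Qed.

Lemma CD_bound f z l : CD f z l ->
  exists d, 0 < d /\ forall w, Cmod (w - z) < d -> Cmod (f w - f z) <= (Cmod l + 1) * Cmod (w - z).
Proof.
  intros H. destruct (H 1 Rlt_0_1) as [d [Hd H1]]. exists d. split; auto.
  intros w Hw. specialize (H1 w Hw).
  replace (f w - f z)%C with ((f w - f z - l * (w - z)) + l * (w - z))%C by ring.
  eapply Rle_trans; [apply Cmod_triangle|]. rewrite Cmod_mult. lra.
Qed.

Lemma CD_loc f g z l d : 0 < d -> (forall w, Cmod (w - z) < d -> f w = g w) -> CD f z l -> CD g z l.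
Proof.
  intros Hd E H eps Heps. destruct (H eps Heps) as [d1 [Hd1 H1]].
  exists (Rmin d d1). split; [apply Rmin_glb_lt; auto|]. intros w Hw.
  assert (W1 : Cmod (w - z) < d) by (eapply Rlt_le_trans; [exact Hw|apply Rmin_l]).
  assert (W2 : Cmod (w - z) < d1) by (eapply Rlt_le_trans; [exact Hw|apply Rmin_r]).
  rewrite <- (E w W1), <- (E z). 2: { replace (z - z)%C with (RtoC 0) by ring. rewrite Cmod_R, Rabs_R0. auto. }
  apply H1; auto.
Qed.

Lemma CD_const k z : CD (fun _ => k) z 0%C.
Proof.
  intros eps Heps. exists 1. split; [lra|]. intros w _.
  replace (k - k - 0 * (w - z))%C with (RtoC 0) by ring. rewrite Cmod_R, Rabs_R0.
  generalize (Cmod_ge_0 (w - z)); intros; nra.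
Qed.

Lemma CD_id z : CD (fun w => w) z 1%C.
Proof.
  intros eps Heps. exists 1. split; [lra|]. intros w _.
  replace (w - z - 1 * (w - z))%C with (RtoC 0) by ring. rewrite Cmod_R, Rabs_R0.
  generalize (Cmod_ge_0 (w - z)); intros; nra.
Qed.

Lemma CD_add f g z lf lg : CD f z lf -> CD g z lg -> CD (fun w => f w + g w)%C z (lf + lg)%C.
Proof.
  intros Hf Hg eps Heps.
  destruct (Hf (eps/2)) as [d1 [Hd1 H1]]; [lra|].
  destruct (Hg (eps/2)) as [d2 [Hd2 H2]]; [lra|].
  exists (Rmin d1 d2). split; [apply Rmin_glb_lt; auto|]. intros w Hw.
  assert (W1 : Cmod (w - z) < d1) by (eapply Rlt_le_trans; [exact Hw|apply Rmin_l]).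
  assert (W2 : Cmod (w - z) < d2) by (eapply Rlt_le_trans; [exact Hw|apply Rmin_r]).
  replace (f w + g w - (f z + g z) - (lf + lg) * (w - z))%C with
    ((f w - f z - lf * (w - z)) + (g w - g z - lg * (w - z)))%C by ring.
  eapply Rle_trans; [apply Cmod_triangle|].
  specialize (H1 w W1). specialize (H2 w W2). lra.
Qed.

Lemma CD_opp f z l : CD f z l -> CD (fun w => - f w)%C z (- l)%C.
Proof.
  intros H eps Heps. destruct (H eps Heps) as [d [Hd H1]]. exists d. split; auto.
  intros w Hw. replace (- f w - - f z - - l * (w - z))%C with (- (f w - f z - l * (w - z)))%C by ring.
  rewrite Cmod_opp. auto.
Qed.

Lemma CD_sub f g z lf lg : CD f z lf -> CD g z lg -> CD (fun w => f w - g w)%C z (lf - lg)%C.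
Proof.
  intros Hf Hg. apply (CD_add f (fun w => - g w)%C). auto. apply CD_opp. auto.
Qed.

Lemma CD_comp f g z lf lg : CD g z lg -> CD f (g z) lf -> CD (fun w => f (g w)) z (lf * lg)%C.
Proof.
  intros Hg Hf eps Heps.
  destruct (CD_bound g z lg Hg) as [d0 [Hd0 H0]].
  set (K := Cmod lg + 1).
  assert (HK : 0 < K) by (unfold K; generalize (Cmod_ge_0 lg); lra).
  destruct (Hf (eps / (2 * K))) as [d1 [Hd1 H1]].
  { apply Rdiv_lt_0_compat; lra. }
  destruct (Hg (eps / (2 * (Cmod lf + 1)))) as [d2 [Hd2 H2]].
  { apply Rdiv_lt_0_compat; generalize (Cmod_ge_0 lf); lra. }
  exists (Rmin (Rmin d0 d2) (d1 / K)). split.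
  { repeat apply Rmin_glb_lt; auto. apply Rdiv_lt_0_compat; auto. }
  intros w Hw.
  assert (W0 : Cmod (w - z) < d0) by (eapply Rlt_le_trans; [exact Hw|]; eapply Rle_trans; [apply Rmin_l|apply Rmin_l]).
  assert (W2 : Cmod (w - z) < d2) by (eapply Rlt_le_trans; [exact Hw|]; eapply Rle_trans; [apply Rmin_l|apply Rmin_r]).
  assert (W1 : Cmod (w - z) < d1 / K) by (eapply Rlt_le_trans; [exact Hw|apply Rmin_r]).
  specialize (H0 w W0). fold K in H0.
  assert (G1 : Cmod (g w - g z) < d1).
  { eapply Rle_lt_trans; [exact H0|]. apply (Rmult_lt_compat_l K) in W1; auto.
    replace (K * (d1 / K)) with d1 in W1 by (field; lra). lra. }
  specialize (H1 (g w) G1). specialize (H2 w W2).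
  replace (f (g w) - f (g z) - lf * lg * (w - z))%C with
    ((f (g w) - f (g z) - lf * (g w - g z)) + lf * (g w - g z - lg * (w - z)))%C by ring.
  eapply Rle_trans; [apply Cmod_triangle|]. rewrite Cmod_mult.
  assert (0 <= Cmod lf) by apply Cmod_ge_0.
  assert (0 <= Cmod (w - z)) by apply Cmod_ge_0.
  assert (A1 : eps / (2 * K) * Cmod (g w - g z) <= eps / 2 * Cmod (w - z)).
  { apply Rle_trans with (eps / (2 * K) * (K * Cmod (w - z))).
    - apply Rmult_le_compat_l; [|exact H0]. apply Rlt_le, Rdiv_lt_0_compat; lra.
    - right. field. lra. }
  assert (A2 : Cmod lf * Cmod (g w - g z - lg * (w - z)) <= eps / 2 * Cmod (w - z)).
  { apply Rle_trans with (Cmod lf * (eps / (2 * (Cmod lf + 1)) * Cmod (w - z))).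
    - apply Rmult_le_compat_l; auto.
    - replace (Cmod lf * (eps / (2 * (Cmod lf + 1)) * Cmod (w - z))) with
        ((Cmod lf / (Cmod lf + 1)) * (eps / 2 * Cmod (w - z))) by (field; lra).
      assert (Cmod lf / (Cmod lf + 1) <= 1).
      { apply (Rmult_le_reg_r (Cmod lf + 1)); [lra|]. field_simplify; lra. }
      assert (0 <= eps / 2 * Cmod (w - z)) by nra.
      assert (0 <= Cmod lf / (Cmod lf + 1)) by (apply Rdiv_le_0_compat; lra).
      nra. }
  lra.
Qed.

Lemma CD_mul f g z lf lg : CD f z lf -> CD g z lg ->
  CD (fun w => f w * g w)%C z (lf * g z + f z * lg)%C.
Proof.
  intros Hf Hg eps Heps.
  destruct (CD_bound g z lg Hg) as [d0 [Hd0 H0]].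
  set (Kg := Cmod lg + 1).
  assert (HKg : 0 < Kg) by (unfold Kg; generalize (Cmod_ge_0 lg); lra).
  set (Mg := Cmod (g z) + Kg).
  assert (HMg : 0 < Mg) by (unfold Mg; generalize (Cmod_ge_0 (g z)); lra).
  set (Kf := Cmod (f z) + 1).
  assert (HKf : 0 < Kf) by (unfold Kf; generalize (Cmod_ge_0 (f z)); lra).
  set (Lf := Cmod lf + 1).
  assert (HLf : 0 < Lf) by (unfold Lf; generalize (Cmod_ge_0 lf); lra).
  destruct (Hf (eps / (3 * Mg))) as [d1 [Hd1 H1]].
  { apply Rdiv_lt_0_compat; lra. }
  destruct (Hg (eps / (3 * Kf))) as [d2 [Hd2 H2]].
  { apply Rdiv_lt_0_compat; lra. }
  set (d3 := eps / (3 * Lf * Kg)).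
  assert (Hd3 : 0 < d3) by (unfold d3; apply Rdiv_lt_0_compat; nra).
  exists (Rmin (Rmin (Rmin d0 1) d1) (Rmin d2 d3)). split.
  { repeat apply Rmin_glb_lt; auto; lra. }
  intros w Hw.
  assert (W0 : Cmod (w - z) < d0) by (eapply Rlt_le_trans; [exact Hw|]; repeat (eapply Rle_trans; [apply Rmin_l|]); lra).
  assert (W01 : Cmod (w - z) < 1) by (eapply Rlt_le_trans; [exact Hw|]; eapply Rle_trans; [apply Rmin_l|]; eapply Rle_trans; [apply Rmin_l|]; apply Rmin_r).
  assert (W1 : Cmod (w - z) < d1) by (eapply Rlt_le_trans; [exact Hw|]; eapply Rle_trans; [apply Rmin_l|]; apply Rmin_r).
  assert (W2 : Cmod (w - z) < d2) by (eapply Rlt_le_trans; [exact Hw|]; eapply Rle_trans; [apply Rmin_r|]; apply Rmin_l).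
  assert (W3 : Cmod (w - z) < d3) by (eapply Rlt_le_trans; [exact Hw|]; eapply Rle_trans; [apply Rmin_r|]; apply Rmin_r).
  specialize (H0 w W0). fold Kg in H0. specialize (H1 w W1). specialize (H2 w W2).
  assert (Pwz : 0 <= Cmod (w - z)) by apply Cmod_ge_0.
  assert (Gw : Cmod (g w) <= Mg).
  { replace (g w) with (g z + (g w - g z))%C by ring.
    eapply Rle_trans; [apply Cmod_triangle|]. unfold Mg. nra. }
  replace (f w * g w - f z * g z - (lf * g z + f z * lg) * (w - z))%C with
    ((f w - f z - lf * (w - z)) * g w + f z * (g w - g z - lg * (w - z)) + lf * (w - z) * (g w - g z))%C by ring.
  eapply Rle_trans; [apply Cmod_triangle|].
  eapply Rle_trans; [apply Rplus_le_compat_r; apply Cmod_triangle|].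
  rewrite !Cmod_mult.
  assert (A1 : Cmod (f w - f z - lf * (w - z)) * Cmod (g w) <= eps / 3 * Cmod (w - z)).
  { apply Rle_trans with (eps / (3 * Mg) * Cmod (w - z) * Mg).
    - apply Rmult_le_compat; auto using Cmod_ge_0.
    - right. field. lra. }
  assert (A2 : Cmod (f z) * Cmod (g w - g z - lg * (w - z)) <= eps / 3 * Cmod (w - z)).
  { apply Rle_trans with (Kf * (eps / (3 * Kf) * Cmod (w - z))).
    - apply Rmult_le_compat; auto using Cmod_ge_0. unfold Kf; lra.
    - right. field. lra. }
  assert (A3 : Cmod lf * Cmod (w - z) * Cmod (g w - g z) <= eps / 3 * Cmod (w - z)).
  { apply Rle_trans with (Lf * Cmod (w - z) * (Kg * d3)).
    - apply Rmult_le_compat; auto using Cmod_ge_0.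
      + apply Rmult_le_pos; auto using Cmod_ge_0.
      + apply Rmult_le_compat_r; auto. unfold Lf; lra.
      + eapply Rle_trans; [exact H0|]. apply Rmult_le_compat_l; lra.
    - right. unfold d3. field. lra. }
  lra.
Qed.

Lemma CD_mulc f k z l : CD f z l -> CD (fun w => k * f w)%C z (k * l)%C.
Proof.
  intros H. assert (X := CD_mul (fun _ => k) f z 0%C l (CD_const k z) H).
  simpl in X. replace (k * l)%C with (0 * f z + k * l)%C by ring. exact X.
Qed.

Lemma CD_inv (z : C) : z <> 0%C -> CD (fun w => / w)%C z (- / (z * z))%C.
Proof.
  intros Hz eps Heps.
  assert (Pz : 0 < Cmod z) by (apply (proj1 (Cmod_gt_0 z)); exact Hz).
  exists (Rmin (Cmod z / 2) (eps * (Cmod z * Cmod z * Cmod z) / 2)). split.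
  { apply Rmin_glb_lt; [lra|]. apply Rdiv_lt_0_compat; [|lra]. repeat apply Rmult_lt_0_compat; auto. }
  intros w Hw.
  assert (W1 : Cmod (w - z) < Cmod z / 2) by (eapply Rlt_le_trans; [exact Hw|apply Rmin_l]).
  assert (W2 : Cmod (w - z) < eps * (Cmod z * Cmod z * Cmod z) / 2) by (eapply Rlt_le_trans; [exact Hw|apply Rmin_r]).
  assert (Cw : Cmod z / 2 <= Cmod w).
  { assert (T := Cmod_triangle w (z - w)). replace (w + (z - w))%C with z in T by ring.
    rewrite Cmod_minus_sym in T. lra. }
  assert (Hw0 : w <> 0%C) by (intro E; subst; rewrite Cmod_0 in Cw; lra).
  replace (/ w - / z - - / (z * z) * (w - z))%C with ((w - z) * (w - z) / (w * (z * z)))%C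
    by (field; auto).
  rewrite Cmod_div by (apply Cmult_neq_0; auto; apply Cmult_neq_0; auto).
  rewrite !Cmod_mult.
  assert (0 <= Cmod (w - z)) by apply Cmod_ge_0.
  apply (Rmult_le_reg_r (Cmod w * (Cmod z * Cmod z))).
  { apply Rmult_lt_0_compat; [lra| nra]. }
  replace (Cmod (w - z) * Cmod (w - z) / (Cmod w * (Cmod z * Cmod z)) * (Cmod w * (Cmod z * Cmod z)))
    with (Cmod (w - z) * Cmod (w - z)) by (field; split; lra).
  assert (Cmod (w - z) * Cmod (w - z) <= Cmod (w - z) * (eps * (Cmod z * Cmod z * Cmod z) / 2)) by nra.
  assert (eps * (Cmod z * Cmod z * Cmod z) / 2 <= eps * (Cmod w * (Cmod z * Cmod z))).
  { assert (0 < Cmod z * Cmod z) by nra. nra. }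
  nra.
Qed.

Definition dq (f : C -> C) (u : C) : C -> C :=
  fun w => if Ceq_dec w u then 0%C else ((f w - f u) / (w - u))%C.

Lemma Cmod_pos_neq (z u : C) : z <> u -> 0 < Cmod (z - u).
Proof.
  intros H. apply (proj1 (Cmod_gt_0 _)). intro E. apply H.
  replace z with ((z - u) + u)%C by ring. rewrite E. ring.
Qed.

Lemma CD_shift (u z : C) : CD (fun w => w - u)%C z (RtoC 1).
Proof.
  intros eps Heps. exists 1. split; [lra|]. intros w _.
  replace (w - u - (z - u) - RtoC 1 * (w - z))%C with (RtoC 0) by ring. rewrite Cmod_R, Rabs_R0.
  generalize (Cmod_ge_0 (w - z)); intros; nra.
Qed.

Lemma CD_dq f u z l : CD f z l -> z <> u -> exists l', CD (dq f u) z l'.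
Proof.
  intros H Hzu.
  assert (Hinv : CD (fun w => / (w - u))%C z (- / ((z - u) * (z - u)) * 1)%C).
  { apply (CD_comp (fun w => / w)%C (fun w => w - u)%C z).
    - apply CD_shift.
    - apply CD_inv. intro E. apply Hzu. replace z with ((z - u) + u)%C by ring. rewrite E. ring. }
  assert (Hnum : CD (fun w => f w - f u)%C z (l - 0)%C) by (apply CD_sub; [auto| apply CD_const]).
  eexists. eapply CD_loc; [apply (Cmod_pos_neq z u Hzu)| |exact (CD_mul _ _ _ _ _ Hnum Hinv)].
  intros w Hw. simpl. unfold dq. destruct (Ceq_dec w u) as [E|E].
  - subst w. rewrite Cmod_minus_sym in Hw. lra.
  - reflexivity.
Qed.

Lemma pair_neq_x (x y u1 u2 : R) : x <> u1 -> (x, y) <> (u1, u2).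
Proof. intros H E. injection E. intros; auto. Qed.
Lemma pair_neq_y (x y u1 u2 : R) : y <> u2 -> (x, y) <> (u1, u2).
Proof. intros H E. injection E. intros; auto. Qed.

Lemma cauchy_pt f a b c d u1 u2 : a < u1 < b -> c < u2 < d ->
  (forall x y, a <= x <= b -> c <= y <= d -> exists l, CD f (x, y) l) ->
  Ir (dq f (u1, u2)) a b c d = 0%C.
Proof.
  intros Hu1 Hu2 Hf.
  set (u := (u1, u2) : C). set (psi := dq f u).
  assert (Dpsi : forall x y, a <= x <= b -> c <= y <= d -> (x, y) <> u -> exists l, CD psi (x, y) l).
  { intros x y Hx Hy Hne. destruct (Hf x y Hx Hy) as [l Hl]. eapply CD_dq; eauto. }
  assert (Cpsi : forall x y, a <= x <= b -> c <= y <= d -> (x, y) <> u -> Ccont psi (x, y)).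
  { intros x y Hx Hy Hne. destruct (Dpsi x y Hx Hy Hne) as [l Hl]. eapply CD_Ccont; eauto. }
  assert (EH : forall y p q, c <= y <= d -> y <> u2 -> a <= p <= q -> q <= b -> exC (fun x => psi (x, y)) p q).
  { intros y p q Hy Hy2 Hp Hq. apply exC_hor; [lra|]. intros x Hx. apply Cpsi; try lra. apply pair_neq_y; auto. }
  assert (EV : forall x p q, a <= x <= b -> x <> u1 -> c <= p <= q -> q <= d -> exC (fun y => psi (x, y)) p q).
  { intros x p q Hx Hx2 Hp Hq. apply exC_ver; [lra|]. intros y Hy. apply Cpsi; try lra. apply pair_neq_x; auto. }
  destruct (Hf u1 u2) as [lu Hlu]; try lra.
  destruct (CD_bound f u lu Hlu) as [d1 [Hd1 Hb]].
  set (K := Cmod lu + 1).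
  assert (HK : 0 < K) by (unfold K; generalize (Cmod_ge_0 lu); lra).
  assert (Key : forall e, 0 < e -> e < u1 - a -> e < b - u1 -> e < u2 - c -> e < d - u2 -> e < d1 / 2 ->
     Cmod (Ir psi a b c d) <= 2 * (4 * e) * K).
  { intros e He H1 H2 H3 H4 H5.
    set (x1 := u1 - e). set (x2 := u1 + e). set (y1 := u2 - e). set (y2 := u2 + e).
    rewrite (Ir_splitx psi a x1 b c d) by (apply EH; unfold x1, x2 in *; lra).
    rewrite (Ir_splitx psi x1 x2 b c d) by (apply EH; unfold x1, x2 in *; lra).
    rewrite (Ir_splity psi x1 x2 c y1 d) by (apply EV; unfold x1, x2, y1 in *; lra).
    rewrite (Ir_splity psi x1 x2 y1 y2 d) by (apply EV; unfold x1, x2, y1, y2 in *; lra).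
    rewrite (goursat psi a x1 c d), (goursat psi x2 b c d), (goursat psi x1 x2 c y1), (goursat psi x1 x2 y2 d);
      try (unfold x1, x2, y1, y2; lra);
      try (intros x y Hx Hy; apply Dpsi; [unfold x1, x2, y1, y2 in *; lra| unfold x1, x2, y1, y2 in *; lra|];
           first [apply pair_neq_x; unfold x1, x2 in *; lra | apply pair_neq_y; unfold y1, y2 in *; lra]).
    match goal with |- Cmod ?t <= _ => replace t with (Ir psi x1 x2 y1 y2) by ring end.
    replace (2 * (4 * e) * K) with (2 * ((x2 - x1) + (y2 - y1)) * K) by (unfold x1, x2, y1, y2; ring).
    apply Ir_bound; try (unfold x1, x2, y1, y2; lra).
    - repeat split.
      + apply EH; unfold x1, x2, y1, y2; lra.
      + apply EV; unfold x1, x2, y1, y2; lra.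
      + apply EH; unfold x1, x2, y1, y2; lra.
      + apply EV; unfold x1, x2, y1, y2; lra.
    - intros z Hz.
      assert (Zne : z <> u).
      { destruct z as [zx zy]. unfold on_bd in Hz; simpl in Hz. unfold u.
        destruct Hz as [[_ [E|E]]|[_ [E|E]]]; rewrite E;
        first [apply pair_neq_y; unfold y1, y2; lra | apply pair_neq_x; unfold x1, x2; lra]. }
      assert (Zd : Cmod (z - u) <= 2 * e).
      { eapply Rle_trans; [apply Cmod_le_sum|].
        destruct z as [zx zy]. unfold on_bd in Hz; simpl in Hz. unfold u; simpl.
        assert (A1 : Rabs (zx - u1) <= e) by (apply Rabs_le; unfold x1, x2, y1, y2 in Hz; destruct Hz as [[? [E|E]]|[? [E|E]]]; lra).
        assert (A2 : Rabs (zy - u2) <= e) by (apply Rabs_le; unfold x1, x2, y1, y2 in Hz; destruct Hz as [[? [E|E]]|[? [E|E]]]; lra).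
        unfold Rminus in A1, A2. lra. }
      unfold psi, dq. destruct (Ceq_dec z u) as [E|E]; [contradiction|].
      assert (Pz : 0 < Cmod (z - u)) by (apply Cmod_pos_neq; auto).
      rewrite Cmod_div by (intro E2; rewrite E2, Cmod_0 in Pz; lra).
      apply (Rmult_le_reg_r (Cmod (z - u))); auto.
      replace (Cmod (f z - f u) / Cmod (z - u) * Cmod (z - u)) with (Cmod (f z - f u)) by (field; lra).
      apply Hb. lra. }
  destruct (Req_dec (Cmod (Ir psi a b c d)) 0) as [E|E].
  { apply Cmod_eq_0. exact E. }
  exfalso.
  set (alpha := Cmod (Ir psi a b c d)) in *.
  assert (Ha : 0 < alpha) by (generalize (Cmod_ge_0 (Ir psi a b c d)); unfold alpha in *; lra).
  set (e := Rmin (Rmin (Rmin ((u1 - a)/2) ((b - u1)/2)) (Rmin ((u2 - c)/2) ((d - u2)/2)))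
                 (Rmin (d1 / 4) (alpha / (16 * K)))).
  assert (E1 : e <= (u1 - a)/2) by (unfold e; repeat (eapply Rle_trans; [apply Rmin_l|]); lra).
  assert (E2 : e <= (b - u1)/2) by (unfold e; eapply Rle_trans; [apply Rmin_l|]; eapply Rle_trans; [apply Rmin_l|]; apply Rmin_r).
  assert (E3 : e <= (u2 - c)/2) by (unfold e; eapply Rle_trans; [apply Rmin_l|]; eapply Rle_trans; [apply Rmin_r|]; apply Rmin_l).
  assert (E4 : e <= (d - u2)/2) by (unfold e; eapply Rle_trans; [apply Rmin_l|]; eapply Rle_trans; [apply Rmin_r|]; apply Rmin_r).
  assert (E5 : e <= d1 / 4) by (unfold e; eapply Rle_trans; [apply Rmin_r|]; apply Rmin_l).
  assert (E6 : e <= alpha / (16 * K)) by (unfold e; eapply Rle_trans; [apply Rmin_r|]; apply Rmin_r).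
  assert (E0 : 0 < e).
  { unfold e. repeat apply Rmin_glb_lt; try lra. apply Rdiv_lt_0_compat; lra. }
  specialize (Key e E0 ltac:(lra) ltac:(lra) ltac:(lra) ltac:(lra) ltac:(lra)).
  fold alpha in Key.
  assert (8 * e * K <= alpha / 2).
  { apply Rle_trans with (8 * (alpha / (16 * K)) * K).
    - apply Rmult_le_compat_r; lra.
    - right. field. lra. }
  lra.
Qed.

Lemma Csub0 (u : C) : (u - 0)%C = u.
Proof. Cring. Qed.

Lemma CD_div_shift phi z l u : CD phi z l -> z <> u -> exists l', CD (fun w => phi w / (w - u))%C z l'.
Proof.
  intros H Hzu.
  assert (Hinv : CD (fun w => / (w - u))%C z (- / ((z - u) * (z - u)) * 1)%C).
  { apply (CD_comp (fun w => / w)%C (fun w => w - u)%C z).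
    - apply CD_shift.
    - apply CD_inv. intro E. apply Hzu. replace z with ((z - u) + u)%C by ring. rewrite E. ring. }
  eexists. exact (CD_mul _ _ _ _ _ H Hinv).
Qed.

Lemma sides_CD g a b c d : a <= b -> c <= d ->
  (forall z, on_bd a b c d z -> exists l, CD g z l) -> sides_ex g a b c d.
Proof.
  intros Hab Hcd H.
  assert (HC : forall z, on_bd a b c d z -> Ccont g z).
  { intros z Hz. destruct (H z Hz) as [l Hl]. eapply CD_Ccont; eauto. }
  repeat split.
  - apply exC_hor; auto. intros x Hx. apply HC. unfold on_bd; simpl; tauto.
  - apply exC_ver; auto. intros x Hx. apply HC. unfold on_bd; simpl; tauto.
  - apply exC_hor; auto. intros x Hx. apply HC. unfold on_bd; simpl; tauto.
  - apply exC_ver; auto. intros x Hx. apply HC. unfold on_bd; simpl; tauto.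
Qed.

Lemma seg_bound (h : R -> C) a b : a <= b ->
  (forall x, a <= x <= b -> @continuous R_UniformSpace C_R_NormedModule h x) ->
  exists M, forall x, a <= x <= b -> Cmod (h x) <= M.
Proof.
  intros Hab H.
  destruct (@bounded_continuity R_AbsRing C_R_NormedModule h a b H) as [M HM].
  exists M. intros x Hx. rewrite <- normCR. left. apply HM. auto.
Qed.

Lemma bd_bound g a b c d : a <= b -> c <= d ->
  (forall z, on_bd a b c d z -> Ccont g z) ->
  exists B, 0 <= B /\ forall z, on_bd a b c d z -> Cmod (g z) <= B.
Proof.
  intros Hab Hcd H.
  destruct (seg_bound (fun x => g (x, c)) a b Hab) as [M1 H1].
  { intros x Hx. apply cont_hor. apply H. unfold on_bd; simpl; tauto. }
  destruct (seg_bound (fun x => g (x, d)) a b Hab) as [M2 H2].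
  { intros x Hx. apply cont_hor. apply H. unfold on_bd; simpl; tauto. }
  destruct (seg_bound (fun y => g (a, y)) c d Hcd) as [M3 H3].
  { intros x Hx. apply cont_ver. apply H. unfold on_bd; simpl; tauto. }
  destruct (seg_bound (fun y => g (b, y)) c d Hcd) as [M4 H4].
  { intros x Hx. apply cont_ver. apply H. unfold on_bd; simpl; tauto. }
  exists (Rmax (Rmax M1 M2) (Rmax (Rmax M3 M4) 0)). split.
  { eapply Rle_trans; [|apply Rmax_r]. eapply Rle_trans; [|apply Rmax_r]. lra. }
  intros [x y] Hz. unfold on_bd in Hz; simpl in Hz.
  destruct Hz as [[Hx [E|E]]|[Hy [E|E]]]; subst.
  - eapply Rle_trans; [apply H1; auto|]. eapply Rle_trans; [|apply Rmax_l]. apply Rmax_l.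
  - eapply Rle_trans; [apply H2; auto|]. eapply Rle_trans; [|apply Rmax_l]. apply Rmax_r.
  - eapply Rle_trans; [apply H3; auto|]. eapply Rle_trans; [|apply Rmax_r].
    eapply Rle_trans; [|apply Rmax_l]. apply Rmax_l.
  - eapply Rle_trans; [apply H4; auto|]. eapply Rle_trans; [|apply Rmax_r].
    eapply Rle_trans; [|apply Rmax_l]. apply Rmax_r.
Qed.

Lemma bd_mod s z : 0 < s -> on_bd (-s) s (-s) s z -> s <= Cmod z.
Proof.
  intros Hs Hz. eapply Rle_trans; [|apply Rmax_Cmod].
  destruct Hz as [[_ [E|E]]|[_ [E|E]]]; rewrite E.
  - eapply Rle_trans; [|apply Rmax_r]. rewrite Rabs_Ropp, Rabs_pos_eq; lra.
  - eapply Rle_trans; [|apply Rmax_r]. rewrite Rabs_pos_eq; lra.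
  - eapply Rle_trans; [|apply Rmax_l]. rewrite Rabs_Ropp, Rabs_pos_eq; lra.
  - eapply Rle_trans; [|apply Rmax_l]. rewrite Rabs_pos_eq; lra.
Qed.

Lemma bd_far s z u : 0 < s -> on_bd (-s) s (-s) s z -> Cmod u < s / 2 -> s / 2 < Cmod (z - u).
Proof.
  intros Hs Hz Hu. assert (H := bd_mod s z Hs Hz).
  assert (T := Cmod_triangle (z - u) u). replace (z - u + u)%C with z in T by ring. lra.
Qed.

Lemma bd_neq s z u : 0 < s -> on_bd (-s) s (-s) s z -> Cmod u < s / 2 -> z <> u.
Proof.
  intros Hs Hz Hu E. subst. assert (H := bd_mod s u Hs Hz). lra.
Qed.

Lemma Ir_lin3 f g h k a b c d : a <= b -> c <= d ->
  sides_ex f a b c d -> sides_ex g a b c d -> sides_ex h a b c d ->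
  Ir (fun z => f z - g z - k * h z)%C a b c d = (Ir f a b c d - Ir g a b c d - k * Ir h a b c d)%C.
Proof.
  intros Hab Hcd Sf Sg Sh.
  rewrite (Ir_ext _ (fun z => (f z + (-1) * g z) + (- k) * h z)%C) by (auto; intros; ring).
  rewrite (Ir_plus (fun z => f z + (-1) * g z)%C (fun z => (- k) * h z)%C).
  - rewrite (Ir_plus f (fun z => (-1) * g z)%C) by (auto; apply sides_mulc; auto).
    rewrite !Ir_mulc by auto. ring.
  - apply sides_plus; auto. apply sides_mulc; auto.
  - apply sides_mulc; auto.
Qed.

Section Jop.
Variable s : R.
Hypothesis Hs : 0 < s.

Definition Jop (phi : C -> C) (u : C) : C := Ir (fun z => phi z / (z - u))%C (-s) s (-s) s.

Lemma J_CD (phi : C -> C) : (forall z, on_bd (-s) s (-s) s z -> exists l, CD phi z l) ->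
  CD (Jop phi) 0%C (Ir (fun z => phi z / (z - 0) / (z - 0))%C (-s) s (-s) s).
Proof.
  intros Hphi.
  assert (Hss : -s <= s) by lra.
  destruct (bd_bound phi (-s) s (-s) s Hss Hss) as [B [HB0 HB]].
  { intros z Hz. destruct (Hphi z Hz) as [l Hl]. eapply CD_Ccont; eauto. }
  assert (SD : forall u, Cmod u < s / 2 -> sides_ex (fun z => phi z / (z - u))%C (-s) s (-s) s).
  { intros u Hu. apply sides_CD; auto. intros z Hz. destruct (Hphi z Hz) as [l Hl].
    apply (CD_div_shift phi z l u Hl). apply (bd_neq s z u); auto. }
  assert (S0 : Cmod 0%C < s / 2) by (rewrite Cmod_0; lra).
  assert (SD2 : sides_ex (fun z => phi z / (z - 0) / (z - 0))%C (-s) s (-s) s).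
  { apply sides_CD; auto. intros z Hz. destruct (Hphi z Hz) as [l Hl].
    destruct (CD_div_shift phi z l 0%C Hl) as [l' Hl']. { apply (bd_neq s z 0%C); auto. }
    apply (CD_div_shift _ z l' 0%C Hl'). apply (bd_neq s z 0%C); auto. }
  intros eps Heps.
  set (del := Rmin (s / 2) (eps * (s * s) / (16 * B + 1))).
  assert (Hdel : 0 < del).
  { unfold del. apply Rmin_glb_lt; [lra|]. apply Rdiv_lt_0_compat; [|lra]. apply Rmult_lt_0_compat; [lra| apply Rmult_lt_0_compat; lra]. }
  exists del. split; auto. intros u Hu.
  rewrite Csub0 in Hu.
  assert (Hu1 : Cmod u < s / 2) by (eapply Rlt_le_trans; [exact Hu| apply Rmin_l]).
  assert (Hu2 : Cmod u < eps * (s * s) / (16 * B + 1)) by (eapply Rlt_le_trans; [exact Hu| apply Rmin_r]).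
  rewrite Csub0.
  set (J2 := Ir (fun z => phi z / (z - 0) / (z - 0))%C (-s) s (-s) s).
  assert (E : (Jop phi u - Jop phi 0 - J2 * u)%C =
              Ir (fun z => (phi z / (z - u) - phi z / (z - 0)) - u * (phi z / (z - 0) / (z - 0)))%C (-s) s (-s) s).
  { unfold Jop, J2. rewrite (Cmult_comm _ u). symmetry.
    apply (Ir_lin3 (fun z => phi z / (z - u))%C (fun z => phi z / (z - 0))%C (fun z => phi z / (z - 0) / (z - 0))%C u); auto. }
  rewrite E.
  set (Bnd := 2 * B * (Cmod u * Cmod u) / (s * s * s)).
  eapply Rle_trans.
  { apply (Ir_bound _ (-s) s (-s) s Bnd); auto.
    - apply (sides_ext (fun z => phi z * (u * u) / ((z - u) * (z * z)))%C); auto.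
      + intros z Hz. assert (z <> u) by (apply (bd_neq s z u); auto).
        assert (z <> 0%C) by (apply (bd_neq s z 0%C); auto).
        assert (z - u <> 0)%C by (intro X; apply H; replace z with ((z - u) + u)%C by ring; rewrite X; ring).
        field. auto.
      + apply sides_CD; auto. intros z Hz. destruct (Hphi z Hz) as [l Hl].
        assert (z <> u) by (apply (bd_neq s z u); auto).
        assert (z <> 0%C) by (apply (bd_neq s z 0%C); auto).
        assert (CDd : exists l2, CD (fun w => / ((w - u) * (w * w)))%C z l2).
        { assert (Hm : CD (fun w => (w - u) * (w * w))%C z ((RtoC 1) * (z * z) + (z - u) * (1 * z + z * 1))%C).
          { apply (CD_mul (fun w => w - u)%C (fun w => w * w)%C). apply CD_shift. apply (CD_mul (fun w => w) (fun w => w)); apply CD_id. }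
          assert (Hnz : ((z - u) * (z * z))%C <> 0%C).
          { apply Cmult_neq_0. intro X; apply H; replace z with ((z - u) + u)%C by ring; rewrite X; ring.
            apply Cmult_neq_0; auto. }
          eexists. exact (CD_comp (fun w => / w)%C _ z _ _ Hm (CD_inv _ Hnz)). }
        destruct CDd as [l2 Hl2].
        assert (Hpu : CD (fun w => phi w * (u * u))%C z (l * (u * u) + phi z * 0)%C)
          by (apply (CD_mul phi (fun _ => u * u)%C); [exact Hl| apply CD_const]).
        eexists. exact (CD_mul _ _ z _ _ Hpu Hl2).
    - intros z Hz.
      assert (Hz0 := bd_mod s z Hs Hz). assert (Hzu := bd_far s z u Hs Hz Hu1).
      assert (z <> u) by (apply (bd_neq s z u); auto).
      assert (z <> 0%C) by (apply (bd_neq s z 0%C); auto).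
      assert (Hzu0 : (z - u)%C <> 0%C) by (intro X; apply H; replace z with ((z - u) + u)%C by ring; rewrite X; ring).
      replace (phi z / (z - u) - phi z / (z - 0) - u * (phi z / (z - 0) / (z - 0)))%C with
        (phi z * (u * u) / ((z - u) * (z * z)))%C by (field; auto).
      rewrite Cmod_div by (apply Cmult_neq_0; auto; apply Cmult_neq_0; auto).
      rewrite !Cmod_mult.
      assert (0 <= Cmod u) by apply Cmod_ge_0.
      assert (0 <= Cmod (phi z)) by apply Cmod_ge_0.
      assert (Pz : 0 < Cmod z) by lra. assert (Pzu : 0 < Cmod (z - u)) by lra.
      apply (Rmult_le_reg_r (Cmod (z - u) * (Cmod z * Cmod z))).
      { apply Rmult_lt_0_compat; [lra| apply Rmult_lt_0_compat; lra]. }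
      replace (Cmod (phi z) * (Cmod u * Cmod u) / (Cmod (z - u) * (Cmod z * Cmod z)) * (Cmod (z - u) * (Cmod z * Cmod z)))
        with (Cmod (phi z) * (Cmod u * Cmod u)) by (field; split; lra).
      unfold Bnd.
      replace (2 * B * (Cmod u * Cmod u) / (s * s * s) * (Cmod (z - u) * (Cmod z * Cmod z))) with
        ((B * (Cmod u * Cmod u)) * ((Cmod (z - u) / (s / 2)) * ((Cmod z / s) * (Cmod z / s)))) by (field; lra).
      assert (A1 : 1 <= Cmod (z - u) / (s / 2)) by (apply (Rmult_le_reg_r (s/2)); [lra|]; field_simplify; lra).
      assert (A2 : 1 <= Cmod z / s) by (apply (Rmult_le_reg_r s); [lra|]; field_simplify; lra).
      assert (A3 : Cmod (phi z) * (Cmod u * Cmod u) <= B * (Cmod u * Cmod u))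
        by (apply Rmult_le_compat_r; [apply Rmult_le_pos; lra| apply HB; auto]).
      assert (A4 : 1 * (1 * 1) <= (Cmod (z - u) / (s / 2)) * ((Cmod z / s) * (Cmod z / s))).
      { apply Rmult_le_compat; try lra. apply Rmult_le_compat; lra. }
      assert (A5 : 0 <= B * (Cmod u * Cmod u)) by (apply Rmult_le_pos; [lra| apply Rmult_le_pos; lra]).
      apply Rle_trans with (B * (Cmod u * Cmod u)); auto.
      rewrite <- (Rmult_1_r (B * (Cmod u * Cmod u))) at 1. apply Rmult_le_compat_l; lra. }
  unfold Bnd.
  assert (0 <= Cmod u) by apply Cmod_ge_0.
  replace (2 * (s - - s + (s - - s)) * (2 * B * (Cmod u * Cmod u) / (s * s * s)))
    with (Cmod u * (16 * B * Cmod u / (s * s))) by (field; lra).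
  rewrite Rmult_comm. apply Rmult_le_compat_r; auto.
  apply (Rmult_le_reg_r (s * s)); [nra|].
  replace (16 * B * Cmod u / (s * s) * (s * s)) with (16 * B * Cmod u) by (field; lra).
  apply (Rmult_lt_compat_r (16 * B + 1)) in Hu2; [|lra].
  replace (eps * (s * s) / (16 * B + 1) * (16 * B + 1)) with (eps * (s * s)) in Hu2 by (field; lra).
  nra.
Qed.

End Jop.

Lemma inv_pair_fst (p q : R) : (p, q) <> RtoC 0 -> fst (Cinv (p, q)) = p / (p * p + q * q).
Proof. intros H. simpl. unfold Rdiv. rewrite ?Ropp_mult_distr_l. f_equal. f_equal. ring. Qed.
Lemma inv_pair_snd (p q : R) : (p, q) <> RtoC 0 -> snd (Cinv (p, q)) = - q / (p * p + q * q).
Proof. intros H. simpl. unfold Rdiv. rewrite ?Ropp_mult_distr_l. f_equal. f_equal. ring. Qed.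

Lemma lowb s t : 0 < s -> -s <= t <= s -> 1 / (2 * s) <= s / (t * t + s * s).
Proof.
  intros Hs Ht. assert (t * t <= s * s) by nra.
  assert (P1 : 0 < t * t + s * s) by (assert (0 <= t * t) by nra; assert (0 < s * s) by nra; lra).
  apply (Rmult_le_reg_r (2 * s * (t * t + s * s))). { apply Rmult_lt_0_compat; lra. }
  replace (1 / (2 * s) * (2 * s * (t * t + s * s))) with (t * t + s * s) by (field; lra).
  replace (s / (t * t + s * s) * (2 * s * (t * t + s * s))) with (2 * s * s) by (field; lra).
  lra.
Qed.

Lemma RInt_lowb (g : R -> R) s : 0 < s -> ex_RInt g (-s) s ->
  (forall t, -s <= t <= s -> 1 / (2 * s) <= g t) -> 1 <= RInt g (-s) s.
Proof.
  intros Hs Hg H.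
  apply Rle_trans with (RInt (fun _ => 1 / (2 * s)) (-s) s).
  - rewrite RInt_const. simpl. unfold scal; simpl. unfold mult; simpl. right. field. lra.
  - apply RInt_le; auto; try lra. apply ex_RInt_const. intros; apply H; lra.
Qed.

Lemma W0_nz s : 0 < s -> Jop s (fun _ => 1%C) 0%C <> 0%C.
Proof.
  intros Hs E.
  assert (Hss : -s <= s) by lra.
  set (h := (fun z => 1 / (z - 0))%C).
  assert (Dh : forall z, on_bd (-s) s (-s) s z -> exists l, CD h z l).
  { intros z Hz. apply (CD_div_shift (fun _ => 1%C) z 0%C 0%C (CD_const _ _)).
    apply (bd_neq s z 0%C); auto. rewrite Cmod_0; lra. }
  destruct (sides_CD h (-s) s (-s) s Hss Hss Dh) as [S1 [S2 [S3 S4]]].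
  assert (Ev : forall p q : R, (p, q) <> RtoC 0 -> h (p, q) = Cinv (p, q)).
  { intros p q Hpq. unfold h. rewrite Csub0. field. auto. }
  assert (Hne1 : forall t, (t, -s) <> RtoC 0) by (intros t X; injection X; lra).
  assert (Hne2 : forall t, (s, t) <> RtoC 0) by (intros t X; injection X; lra).
  assert (Hne3 : forall t, (t, s) <> RtoC 0) by (intros t X; injection X; lra).
  assert (Hne4 : forall t, (-s, t) <> RtoC 0) by (intros t X; injection X; lra).
  assert (I1 : 1 <= snd (CInt (fun x => h (x, -s)) (-s) s)).
  { rewrite CInt_snd by auto. apply RInt_lowb; auto.
    - apply (@ex_RInt_fct_extend_snd R_NormedModule R_NormedModule). exact S1.
    - intros t Ht. rewrite Ev, inv_pair_snd by auto.
      replace (- - s / (t * t + - s * - s)) with (s / (t * t + s * s)) by (field; nra). apply lowb; auto. }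
  assert (I2 : 1 <= fst (CInt (fun y => h (s, y)) (-s) s)).
  { rewrite CInt_fst by auto. apply RInt_lowb; auto.
    - apply (@ex_RInt_fct_extend_fst R_NormedModule R_NormedModule). exact S2.
    - intros t Ht. rewrite Ev, inv_pair_fst by auto.
      replace (s / (s * s + t * t)) with (s / (t * t + s * s)) by (field; nra). apply lowb; auto. }
  assert (I3 : 1 <= - snd (CInt (fun x => h (x, s)) (-s) s)).
  { rewrite CInt_snd by auto.
    assert (X : 1 <= RInt (fun t => - snd (h (t, s))) (-s) s).
    { apply RInt_lowb; auto.
      - exact (@ex_RInt_opp R_NormedModule (fun t => snd (h (t, s))) _ _ (@ex_RInt_fct_extend_snd R_NormedModule R_NormedModule _ _ _ S3)).
      - intros t Ht. rewrite Ev, inv_pair_snd by auto.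
        replace (- (- s / (t * t + s * s))) with (s / (t * t + s * s)) by (field; nra). apply lowb; auto. }
    replace (RInt (fun t => - snd (h (t, s))) (-s) s) with (- RInt (fun t => snd (h (t, s))) (-s) s) in X.
    exact X. symmetry.
    exact (@RInt_opp R_CompleteNormedModule (fun t => snd (h (t, s))) _ _ (@ex_RInt_fct_extend_snd R_NormedModule R_NormedModule _ _ _ S3)). }
  assert (I4 : 1 <= - fst (CInt (fun y => h (-s, y)) (-s) s)).
  { rewrite CInt_fst by auto.
    assert (X : 1 <= RInt (fun t => - fst (h (-s, t))) (-s) s).
    { apply RInt_lowb; auto.
      - exact (@ex_RInt_opp R_NormedModule (fun t => fst (h (-s, t))) _ _ (@ex_RInt_fct_extend_fst R_NormedModule R_NormedModule _ _ _ S4)).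
      - intros t Ht. rewrite Ev, inv_pair_fst by auto.
        replace (- (- s / (- s * - s + t * t))) with (s / (t * t + s * s)) by (field; nra). apply lowb; auto. }
    replace (RInt (fun t => - fst (h (-s, t))) (-s) s) with (- RInt (fun t => fst (h (-s, t))) (-s) s) in X.
    exact X. symmetry.
    exact (@RInt_opp R_CompleteNormedModule (fun t => fst (h (-s, t))) _ _ (@ex_RInt_fct_extend_fst R_NormedModule R_NormedModule _ _ _ S4)). }
  unfold Jop in E. fold h in E. unfold Ir in E.
  set (A1 := CInt (fun x => h (x, -s)) (-s) s) in *.
  set (A2 := CInt (fun y => h (s, y)) (-s) s) in *.
  set (A3 := CInt (fun x => h (x, s)) (-s) s) in *.
  set (A4 := CInt (fun y => h (-s, y)) (-s) s) in *.
  clearbody A1 A2 A3 A4.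
  apply (f_equal snd) in E.
  assert (Es : snd (A1 + Ci * A2 - A3 - Ci * A4)%C = snd A1 + fst A2 - snd A3 - fst A4).
  { destruct A1, A2, A3, A4; simpl; ring. }
  rewrite Es in E. simpl in E. lra.
Qed.

Lemma Cmod_pair_le (x y s : R) : -s <= x <= s -> -s <= y <= s -> Cmod (x, y) <= 2 * s.
Proof.
  intros Hx Hy. eapply Rle_trans; [apply Cmod_le_sum|]. simpl.
  assert (Rabs x <= s) by (apply Rabs_le; lra). assert (Rabs y <= s) by (apply Rabs_le; lra). lra.
Qed.

Lemma Cmod_fst_le (u : C) : Rabs (fst u) <= Cmod u.
Proof. eapply Rle_trans; [|apply Rmax_Cmod]. apply Rmax_l. Qed.
Lemma Cmod_snd_le (u : C) : Rabs (snd u) <= Cmod u.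
Proof. eapply Rle_trans; [|apply Rmax_Cmod]. apply Rmax_r. Qed.

Lemma removable (k : C -> C) (r : R) (l0 : C) : 0 < r ->
  (forall u, Cmod u < r -> exists l, CD k u l) -> k 0%C = 0%C -> CD k 0%C l0 ->
  exists L, CD (fun u => if Ceq_dec u 0%C then l0 else (k u / u)%C) 0%C L.
Proof.
  intros Hr Hk Hk0 Hl0.
  set (s := r / 3).
  assert (Hs : 0 < s) by (unfold s; lra).
  assert (Hss : -s <= s) by lra.
  assert (Hsq : forall x y, -s <= x <= s -> -s <= y <= s -> exists l, CD k (x, y) l).
  { intros x y Hx Hy. apply Hk. eapply Rle_lt_trans; [apply Cmod_pair_le; eauto|]. unfold s; lra. }
  assert (Hbd : forall z, on_bd (-s) s (-s) s z -> exists l, CD k z l).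
  { intros [x y] Hz. apply Hsq; unfold on_bd in Hz; simpl in Hz;
    destruct Hz as [[? [E|E]]|[? [E|E]]]; lra. }
  set (phi1 := fun _ : C => RtoC 1).
  set (phi2 := fun z => (k z / (z - 0))%C).
  set (W := Jop s phi1). set (M := Jop s phi2).
  assert (HW : CD W 0%C (Ir (fun z => phi1 z / (z - 0) / (z - 0))%C (-s) s (-s) s)).
  { apply J_CD; auto. intros z Hz. exists 0%C. apply CD_const. }
  assert (HM : CD M 0%C (Ir (fun z => phi2 z / (z - 0) / (z - 0))%C (-s) s (-s) s)).
  { apply J_CD; auto. intros z Hz. destruct (Hbd z Hz) as [l Hl].
    apply (CD_div_shift k z l 0%C Hl). apply (bd_neq s z 0%C); auto. rewrite Cmod_0; lra. }
  set (W' := Ir (fun z => phi1 z / (z - 0) / (z - 0))%C (-s) s (-s) s) in HW.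
  set (M' := Ir (fun z => phi2 z / (z - 0) / (z - 0))%C (-s) s (-s) s) in HM.
  assert (Id : forall u, Cmod u < s / 2 -> (u * M u)%C = (k u * W u)%C).
  { intros u Hu.
    assert (Hu1 : -s < fst u < s) by (generalize (Cmod_fst_le u); intros X; apply Rabs_def2 in X || idtac;
       assert (Rabs (fst u) < s) by lra; apply Rabs_def2 in H; lra).
    assert (Hu2 : -s < snd u < s) by (generalize (Cmod_snd_le u); intros X;
       assert (Rabs (snd u) < s) by lra; apply Rabs_def2 in H; lra).
    assert (C1 : Ir (dq k u) (-s) s (-s) s = 0%C).
    { destruct u as [u1 u2]. apply cauchy_pt; simpl in *; auto. }
    assert (C0 : Ir (dq k 0%C) (-s) s (-s) s = 0%C).
    { apply (cauchy_pt k (-s) s (-s) s 0 0); auto; lra. }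
    assert (S0 : Cmod 0%C < s / 2) by (rewrite Cmod_0; lra).
    assert (SDu : sides_ex (dq k u) (-s) s (-s) s).
    { apply sides_CD; auto. intros z Hz. destruct (Hbd z Hz) as [l Hl].
      apply (CD_dq k u z l Hl). apply (bd_neq s z u); auto. }
    assert (SD0 : sides_ex (dq k 0%C) (-s) s (-s) s).
    { apply sides_CD; auto. intros z Hz. destruct (Hbd z Hz) as [l Hl].
      apply (CD_dq k 0%C z l Hl). apply (bd_neq s z 0%C); auto. }
    assert (SDw : sides_ex (fun z => phi1 z / (z - u))%C (-s) s (-s) s).
    { apply sides_CD; auto. intros z Hz.
      apply (CD_div_shift phi1 z 0%C u (CD_const _ _)). apply (bd_neq s z u); auto. }
    assert (SDm : sides_ex (fun z => phi2 z / (z - u))%C (-s) s (-s) s).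
    { apply sides_CD; auto. intros z Hz. destruct (Hbd z Hz) as [l Hl].
      destruct (CD_div_shift k z l 0%C Hl) as [l' Hl']. { apply (bd_neq s z 0%C); auto. }
      apply (CD_div_shift phi2 z l' u Hl'). apply (bd_neq s z u); auto. }
    unfold M, W, Jop. rewrite <- Ir_mulc by auto.
    rewrite (Ir_ext _ (fun z => dq k u z - dq k 0%C z - (- k u) * (phi1 z / (z - u)))%C); auto.
    - rewrite Ir_lin3; auto. rewrite C1, C0. ring.
    - intros z Hz. assert (z <> u) by (apply (bd_neq s z u); auto).
      assert (z <> 0%C) by (apply (bd_neq s z 0%C); auto).
      assert (Hzu : (z - u)%C <> 0%C) by (intro X; apply H; replace z with ((z - u) + u)%C by ring; rewrite X; ring).
      unfold dq, phi1, phi2. destruct (Ceq_dec z u); [contradiction|].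
      destruct (Ceq_dec z 0%C); [contradiction|].
      rewrite Hk0. rewrite !Csub0. field. auto. }
  assert (W0 : W 0%C <> 0%C) by (apply W0_nz; auto).
  assert (PW0 : 0 < Cmod (W 0%C)) by (apply (proj1 (Cmod_gt_0 _)); exact W0).
  destruct (CD_Ccont W 0%C W' HW (Cmod (W 0%C)) PW0) as [rho1 [Hrho1 Wc]].
  assert (Wnz : forall u, Cmod u < rho1 -> W u <> 0%C).
  { intros u Hu E. specialize (Wc u). rewrite Csub0 in Wc. specialize (Wc Hu).
    rewrite E in Wc. replace (0 - W 0%C)%C with (- W 0%C)%C in Wc by ring. rewrite Cmod_opp in Wc. lra. }
  set (rho := Rmin (s / 2) rho1).
  assert (Hrho : 0 < rho) by (unfold rho; apply Rmin_glb_lt; lra).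
  set (Q := fun u => (M u * / W u)%C).
  assert (HQ : CD Q 0%C (M' * / W 0%C + M 0%C * (- / (W 0%C * W 0%C) * W'))%C).
  { apply (CD_mul M (fun u => / W u)%C); auto.
    apply (CD_comp (fun w => / w)%C W 0%C); auto. apply CD_inv. auto. }
  assert (QE : forall u, Cmod u < rho -> u <> 0%C -> Q u = (k u / u)%C).
  { intros u Hu Hu0.
    assert (Hu1 : Cmod u < s / 2) by (eapply Rlt_le_trans; [exact Hu| apply Rmin_l]).
    assert (Hu2 : Cmod u < rho1) by (eapply Rlt_le_trans; [exact Hu| apply Rmin_r]).
    assert (X := Id u Hu1). assert (Wu := Wnz u Hu2). unfold Q.
    assert (Mu : M u = (k u * W u / u)%C) by (rewrite <- X; field; auto).
    rewrite Mu. field. split; auto. }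
  assert (Q0 : Q 0%C = l0).
  { destruct (Req_dec (Cmod (l0 - Q 0%C)) 0) as [E|E].
    { apply Cmod_eq_0 in E. replace l0 with ((l0 - Q 0%C) + Q 0%C)%C by ring. rewrite E. ring. }
    exfalso. set (eps := Cmod (l0 - Q 0%C)) in *.
    assert (Heps : 0 < eps) by (generalize (Cmod_ge_0 (l0 - Q 0%C)); unfold eps in *; lra).
    destruct (Hl0 (eps / 2)) as [d1 [Hd1 H1]]; [lra|].
    destruct (CD_Ccont Q 0%C _ HQ (eps / 2)) as [d2 [Hd2 H2]]; [lra|].
    set (t := Rmin (Rmin d1 d2) rho / 2).
    assert (Ht : 0 < t) by (unfold t; apply Rdiv_lt_0_compat; [repeat apply Rmin_glb_lt|]; lra).
    assert (Ht1 : t < d1) by (unfold t; assert (Rmin (Rmin d1 d2) rho <= d1) by (eapply Rle_trans; apply Rmin_l); lra).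
    assert (Ht2 : t < d2) by (unfold t; assert (Rmin (Rmin d1 d2) rho <= d2) by (eapply Rle_trans; [apply Rmin_l| apply Rmin_r]); lra).
    assert (Ht3 : t < rho) by (unfold t; assert (Rmin (Rmin d1 d2) rho <= rho) by apply Rmin_r; lra).
    set (u := RtoC t).
    assert (Mu : Cmod u = t) by (unfold u; rewrite Cmod_R, Rabs_pos_eq; lra).
    assert (Mu' : Cmod (u - 0) = t) by (rewrite Csub0; auto).
    assert (Hu0 : u <> 0%C) by (intro X; rewrite X, Cmod_0 in Mu; lra).
    specialize (H1 u ltac:(lra)). specialize (H2 u ltac:(lra)).
    rewrite Hk0, !Csub0 in H1. rewrite Mu in H1.
    assert (A : Cmod (k u / u - l0) <= eps / 2).
    { replace (k u / u - l0)%C with ((k u - l0 * u) / u)%C by (field; auto).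
      rewrite Cmod_div by auto. rewrite Mu. apply (Rmult_le_reg_r t); auto.
      replace (Cmod (k u - l0 * u) / t * t) with (Cmod (k u - l0 * u)) by (field; lra). exact H1. }
    rewrite (QE u ltac:(lra) Hu0) in H2.
    assert (T := Cmod_triangle (l0 - k u / u) (k u / u - Q 0%C)).
    replace (l0 - k u / u + (k u / u - Q 0%C))%C with (l0 - Q 0%C)%C in T by ring.
    rewrite (Cmod_minus_sym l0 (k u / u)%C) in T. fold eps in T. lra. }
  exists (M' * / W 0%C + M 0%C * (- / (W 0%C * W 0%C) * W'))%C.
  apply (CD_loc Q _ 0%C _ rho Hrho); auto.
  intros w Hw. rewrite Csub0 in Hw. destruct (Ceq_dec w 0%C) as [E|E].
  - subst w. exact Q0.
  - apply QE; auto.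
Qed.

Definition CF (D : C -> Prop) (f : C -> C) (p v : C) : Prop :=
  forall eps, 0 < eps -> exists d, 0 < d /\ forall w, Cmod (w - p) < d -> D w -> Cmod (f w - v) < eps.

Lemma cont_from_CF (D : C -> Prop) (f : C -> C) (p : C) :
  filterlim f (within D (@locally C_UniformSpace p)) (@locally C_UniformSpace (f p)) <-> CF D f p (f p).
Proof.
  split.
  - intros H eps Heps.
    assert (L : @locally C_UniformSpace (f p) (fun v => Cmod (v - f p) < eps)).
    { apply loc_C. exists eps. split; auto. }
    specialize (H _ L). unfold within in H. apply loc_C in H.
    destruct H as [d [Hd H]]. exists d. split; auto.
  - intros H P HP. apply loc_C in HP. destruct HP as [eps [Heps HP]].
    destruct (H eps Heps) as [d [Hd H1]]. unfold filtermap, within. apply loc_C.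
    exists d. split; [exact Hd|]. intros w Hw Dw. apply HP. apply H1; auto.
Qed.

Lemma CF_of_Ccont D f p : Ccont f p -> CF D f p (f p).
Proof.
  intros H eps Heps. destruct (H eps Heps) as [d [Hd H1]]. exists d. split; auto.
Qed.

Lemma CF_loc D f g p v d0 : 0 < d0 -> (forall w, Cmod (w - p) < d0 -> D w -> f w = g w) ->
  CF D f p v -> CF D g p v.
Proof.
  intros Hd0 E H eps Heps. destruct (H eps Heps) as [d [Hd H1]].
  exists (Rmin d0 d). split; [apply Rmin_glb_lt; auto|]. intros w Hw Dw.
  assert (W1 : Cmod (w - p) < d0) by (eapply Rlt_le_trans; [exact Hw|apply Rmin_l]).
  assert (W2 : Cmod (w - p) < d) by (eapply Rlt_le_trans; [exact Hw|apply Rmin_r]).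
  rewrite <- E; auto.
Qed.

Lemma CF_comp D1 D2 (g h : C -> C) p q v d0 : 0 < d0 ->
  (forall w, Cmod (w - p) < d0 -> D1 w -> D2 (h w)) ->
  CF D1 h p q -> CF D2 g q v -> CF D1 (fun w => g (h w)) p v.
Proof.
  intros Hd0 HD Hh Hg eps Heps.
  destruct (Hg eps Heps) as [d1 [Hd1 H1]].
  destruct (Hh d1 Hd1) as [d2 [Hd2 H2]].
  exists (Rmin d0 d2). split; [apply Rmin_glb_lt; auto|]. intros w Hw Dw.
  assert (W1 : Cmod (w - p) < d0) by (eapply Rlt_le_trans; [exact Hw|apply Rmin_l]).
  assert (W2 : Cmod (w - p) < d2) by (eapply Rlt_le_trans; [exact Hw|apply Rmin_r]).
  apply H1; auto.
Qed.

Lemma CF_mul D f g p a b : CF D f p a -> CF D g p b -> CF D (fun w => f w * g w)%C p (a * b)%C.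
Proof.
  intros Hf Hg eps Heps.
  set (Ka := Cmod a + 1). set (Kb := Cmod b + 1).
  assert (HKa : 0 < Ka) by (unfold Ka; generalize (Cmod_ge_0 a); lra).
  assert (HKb : 0 < Kb) by (unfold Kb; generalize (Cmod_ge_0 b); lra).
  destruct (Hf (eps / (2 * Kb))) as [d1 [Hd1 H1]]. { apply Rdiv_lt_0_compat; lra. }
  destruct (Hg (Rmin 1 (eps / (2 * Ka)))) as [d2 [Hd2 H2]].
  { apply Rmin_glb_lt; [lra|]. apply Rdiv_lt_0_compat; lra. }
  exists (Rmin d1 d2). split; [apply Rmin_glb_lt; auto|]. intros w Hw Dw.
  assert (W1 : Cmod (w - p) < d1) by (eapply Rlt_le_trans; [exact Hw|apply Rmin_l]).
  assert (W2 : Cmod (w - p) < d2) by (eapply Rlt_le_trans; [exact Hw|apply Rmin_r]).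
  specialize (H1 w W1 Dw). specialize (H2 w W2 Dw).
  assert (G1 : Cmod (g w - b) < 1) by (eapply Rlt_le_trans; [exact H2|apply Rmin_l]).
  assert (G2 : Cmod (g w - b) < eps / (2 * Ka)) by (eapply Rlt_le_trans; [exact H2|apply Rmin_r]).
  assert (Gw : Cmod (g w) <= Kb).
  { replace (g w) with (b + (g w - b))%C by ring. eapply Rle_trans; [apply Cmod_triangle|]. unfold Kb; lra. }
  replace (f w * g w - a * b)%C with ((f w - a) * g w + a * (g w - b))%C by ring.
  eapply Rle_lt_trans; [apply Cmod_triangle|]. rewrite !Cmod_mult.
  assert (0 <= Cmod (f w - a)) by apply Cmod_ge_0.
  assert (0 <= Cmod a) by apply Cmod_ge_0.
  assert (0 <= Cmod (g w - b)) by apply Cmod_ge_0.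
  assert (A1 : Cmod (f w - a) * Cmod (g w) <= eps / (2 * Kb) * Kb).
  { apply Rmult_le_compat; auto using Cmod_ge_0. lra. }
  assert (A2 : Cmod a * Cmod (g w - b) <= Ka * (eps / (2 * Ka))).
  { apply Rmult_le_compat; auto. unfold Ka; lra. lra. }
  assert (A3 : Cmod (f w - a) * Cmod (g w) < eps / (2 * Kb) * Kb \/ Cmod a * Cmod (g w - b) < Ka * (eps / (2 * Ka)) \/
              (Cmod (f w - a) * Cmod (g w) <= eps / (2 * Kb) * Kb /\ Cmod a * Cmod (g w - b) <= Ka * (eps / (2 * Ka)))) by auto.
  replace (eps / (2 * Kb) * Kb) with (eps / 2) in A1 by (field; lra).
  replace (Ka * (eps / (2 * Ka))) with (eps / 2) in A2 by (field; lra).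
  assert (S : Cmod a * Cmod (g w - b) < eps / 2 \/ Cmod (f w - a) * Cmod (g w) < eps / 2).
  { destruct (Req_dec (Cmod a) 0) as [E|E].
    - left. rewrite E. lra.
    - left. apply Rle_lt_trans with (Cmod a * (eps / (2 * Ka))).
      + apply Rmult_le_compat_l; lra.
      + apply (Rmult_lt_reg_r (2 * Ka)); [lra|].
        replace (Cmod a * (eps / (2 * Ka)) * (2 * Ka)) with (Cmod a * eps) by (field; lra).
        replace (eps / 2 * (2 * Ka)) with (Ka * eps) by field. unfold Ka. nra. }
  destruct S; lra.
Qed.

Lemma holo_CD f z : C_holo_at f z <-> exists l, CD f z l.
Proof.
  unfold C_holo_at. split; intros [l H]; exists l; apply is_derive_CD; auto.
Qed.

From Stdlib Require Import Classical Lia.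

Lemma CD_comp' f g z y lf lg : CD g z lg -> g z = y -> CD f y lf -> CD (fun w => f (g w)) z (lf * lg)%C.
Proof. intros H1 E H2. subst y. apply CD_comp; auto. Qed.

Lemma Cmod_lt_shift (w z : C) : Cmod (w - z) <= Cmod w + Cmod z.
Proof. unfold Cminus. eapply Rle_trans; [apply Cmod_triangle|]. rewrite Cmod_opp. lra. Qed.

Section Facts.
Variable m : nat.
Variable eta : nat -> R -> C.
Variable G : C -> Prop.
Variable z0 : C.
Hypothesis HS : setting m eta G.
Hypothesis Hz0 : inside eta (m - 1)%nat z0.

Lemma z0_Gminus : Gminus m eta G z0.
Proof.
  destruct HS as [Hm [_ [_ [_ [_ [_ [_ [_ [_ [HGm _]]]]]]]]]].
  apply HGm. exists (m - 1)%nat. split; [lia| exact Hz0].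
Qed.

Lemma z0_ball : exists r0, 0 < r0 /\ forall w, Cmod (w - z0) < r0 -> Gminus m eta G w.
Proof.
  destruct HS as [Hm [_ [_ [_ [_ [_ [_ [_ [Hcl [HGm _]]]]]]]]]].
  destruct z0_Gminus as [NG NGa].
  assert (NC : ~ C_closure G z0).
  { intro X. apply NGa. apply Hcl. split; auto. }
  unfold C_closure in NC. apply not_all_ex_not in NC. destruct NC as [eps NC].
  apply imply_to_and in NC. destruct NC as [Heps NC].
  assert (Far : forall w, G w -> eps <= Cmod (w - z0)).
  { intros w Gw. destruct (Rle_or_lt eps (Cmod (w - z0))) as [X|X]; auto.
    exfalso. apply NC. exists w. split; auto. }
  exists (eps / 2). split; [lra|]. intros w Hw. split.
  - intro Gw. specialize (Far w Gw). lra.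
  - intro Gaw. apply Hcl in Gaw. destruct Gaw as [Clw _].
    destruct (Clw (eps / 2)) as [v [Gv Hv]]; [lra|].
    specialize (Far v Gv).
    assert (T := Cmod_triangle (v - w) (w - z0)). replace (v - w + (w - z0))%C with (v - z0)%C in T by ring.
    unfold Cminus in Hv. fold (Cminus v w) in Hv. lra.
Qed.

Lemma G_far : exists R0, 0 <= R0 /\ forall z, R0 < Cmod z -> G z.
Proof.
  destruct HS as [_ [_ [_ [_ [_ [_ [_ [[r Hr] _]]]]]]]].
  exists (Rmax r 0). split; [apply Rmax_r|]. intros z Hz. apply Hr.
  eapply Rle_lt_trans; [apply Rmax_l| exact Hz].
Qed.

Lemma Gamma_neq p : Gamma m eta p -> p <> z0.
Proof. intros H E. subst. destruct z0_Gminus as [_ X]. auto. Qed.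

Lemma G_neq z : G z -> z <> z0.
Proof. intros H E. subst. destruct z0_Gminus as [X _]. auto. Qed.

End Facts.

Lemma sub_nz (z z0 : C) : z <> z0 -> (z - z0)%C <> 0%C.
Proof. intros H X. apply H. replace z with ((z - z0) + z0)%C by ring. rewrite X. ring. Qed.

Lemma Psi_nz z0 z : z <> z0 -> Psi z0 z <> 0%C.
Proof.
  intros H X. unfold Psi in X. assert (Y := sub_nz z z0 H).
  assert (E : ((z - z0) * / (z - z0))%C = RtoC 1) by (field; auto).
  rewrite X in E. apply (f_equal fst) in E. simpl in E. lra.
Qed.

Lemma Psi_inv z0 z : z <> z0 -> (z0 + / Psi z0 z)%C = z.
Proof. intros H. unfold Psi. assert (Y := sub_nz z z0 H). field. auto. Qed.

Lemma Psi_of (z0 w : C) : w <> 0%C -> Psi z0 (z0 + / w)%C = w.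
Proof. intros H. unfold Psi. replace (z0 + / w - z0)%C with (/ w)%C by ring. field. auto. Qed.

Lemma CD_Psi z0 z : z <> z0 -> CD (Psi z0) z (- / ((z - z0) * (z - z0)) * 1)%C.
Proof.
  intros H. unfold Psi. apply (CD_comp (fun w => / w)%C (fun w => w - z0)%C z).
  - apply CD_shift.
  - apply CD_inv. apply sub_nz; auto.
Qed.

Lemma Ccont_Psi z0 z : z <> z0 -> Ccont (Psi z0) z.
Proof. intros H. eapply CD_Ccont. apply CD_Psi; auto. Qed.

Lemma CD_rinv (z0 w : C) : w <> 0%C -> CD (fun u => z0 + / u)%C w (0 + - / (w * w))%C.
Proof. intros H. apply (CD_add (fun _ => z0) (fun u => / u)%C). apply CD_const. apply CD_inv; auto. Qed.

Lemma Ccont_rinv (z0 w : C) : w <> 0%C -> Ccont (fun u => z0 + / u)%C w.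
Proof. intros H. eapply CD_Ccont. apply CD_rinv; auto. Qed.

Lemma Ccont_inv (w : C) : w <> 0%C -> Ccont (fun u => / u)%C w.
Proof. intros H. eapply CD_Ccont. apply CD_inv; auto. Qed.

Lemma T2 m eta G z0 fhat :
  (forall z, G z -> z <> z0) -> (forall p, Gamma m eta p -> p <> z0) ->
  analytic_Ghat_plus m eta z0 G fhat ->
  analytic_G_plus m eta G (fun z => Psi z0 z * fhat (Psi z0 z))%C.
Proof.
  intros HGn HGa [Hh Hc]. split; [|split].
  - intros z Gz. apply holo_CD.
    assert (Hz := HGn z Gz).
    destruct (proj1 (holo_CD _ _) (Hh (Psi z0 z) (or_intror (ex_intro _ z (conj Gz eq_refl))))) as [lf Hlf].
    eexists. apply (CD_mul (Psi z0) (fun w => fhat (Psi z0 w))).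
    + apply CD_Psi; auto.
    + apply (CD_comp fhat (Psi z0) z _ _ (CD_Psi z0 z Hz) Hlf).
  - unfold C_holo_at_infty. apply holo_CD.
    destruct (proj1 (holo_CD _ _) (Hh 0%C (or_introl eq_refl))) as [lf Hlf].
    set (phi := fun w => (w * / (1 - z0 * w))%C).
    assert (Hphi0 : phi 0%C = 0%C) by (unfold phi; ring).
    assert (Hden : (1 - z0 * 0)%C <> 0%C).
    { replace (1 - z0 * 0)%C with (RtoC 1) by ring. intro X. apply (f_equal fst) in X. simpl in X. lra. }
    assert (Dphi : CD phi 0%C (1 * / (1 - z0 * 0) + 0 * (- / ((1 - z0 * 0) * (1 - z0 * 0)) * (0 - (0 * 0 + z0 * 1))))%C).
    { apply (CD_mul (fun w => w) (fun w => / (1 - z0 * w))%C).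
      - apply CD_id.
      - apply (CD_comp (fun u => / u)%C (fun w => 1 - z0 * w)%C).
        + apply (CD_sub (fun _ => RtoC 1) (fun w => z0 * w)%C). apply CD_const.
          apply (CD_mul (fun _ => z0) (fun w => w)). apply CD_const. apply CD_id.
        + apply CD_inv. auto. }
    set (rho := / (2 * (Cmod z0 + 1))).
    assert (Hrho : 0 < rho) by (unfold rho; apply Rinv_0_lt_compat; generalize (Cmod_ge_0 z0); lra).
    assert (DH : exists L, CD (fun w => phi w * fhat (phi w))%C 0%C L).
    { eexists. apply (CD_mul phi (fun w => fhat (phi w))); [exact Dphi|].
      apply (CD_comp' fhat phi 0%C 0%C lf _ Dphi Hphi0 Hlf). }
    destruct DH as [L DH]. exists L. refine (CD_loc _ _ 0%C _ rho Hrho _ DH).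
    intros w Hw. rewrite Csub0 in Hw. destruct (Ceq_dec w 0%C) as [E|E].
    + subst. simpl. rewrite Hphi0. ring.
    + assert (Hd : (1 - z0 * w)%C <> 0%C).
        { intro X. assert (Y : Cmod (z0 * w) = 1).
          { replace (z0 * w)%C with (RtoC 1) by (replace (z0 * w)%C with (1 - (1 - z0 * w))%C by ring; rewrite X; ring).
            rewrite Cmod_R, Rabs_R1. reflexivity. }
          rewrite Cmod_mult in Y. assert (0 <= Cmod z0) by apply Cmod_ge_0.
          assert (Cmod w * (2 * (Cmod z0 + 1)) < 1).
          { apply (Rmult_lt_compat_r (2 * (Cmod z0 + 1))) in Hw; [|lra].
            unfold rho in Hw. rewrite Rinv_l in Hw by lra. exact Hw. }
          assert (0 <= Cmod w) by apply Cmod_ge_0. nra. }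
        assert (Ep : Psi z0 (/ w)%C = phi w).
        { unfold Psi, phi. field. split; [exact Hd| exact E]. }
        rewrite Ep. reflexivity.
  - intros p Hp. apply cont_from_CF.
    assert (Hpn := HGa p Hp).
    assert (Hgh : Gammahat m eta z0 (Psi z0 p)) by (exists p; auto).
    assert (Hf := proj1 (cont_from_CF _ _ _) (Hc _ Hgh)).
    apply (CF_mul G (Psi z0) (fun w => fhat (Psi z0 w))).
    + apply CF_of_Ccont. apply Ccont_Psi; auto.
    + apply (CF_comp G (Ghat z0 G) fhat (Psi z0) p (Psi z0 p) _ 1); [lra| |apply CF_of_Ccont, Ccont_Psi; auto| exact Hf].
      intros w _ Gw. right. exists w. auto.
Qed.

Lemma small_den (z0 w : C) : Cmod w < / (2 * (Cmod z0 + 1)) -> (1 + z0 * w)%C <> 0%C /\ (1 - z0 * w)%C <> 0%C.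
Proof.
  intros Hw.
  assert (0 <= Cmod z0) by apply Cmod_ge_0. assert (0 <= Cmod w) by apply Cmod_ge_0.
  assert (Y : Cmod (z0 * w) < 1).
  { rewrite Cmod_mult.
    assert (Cmod w * (2 * (Cmod z0 + 1)) < 1).
    { apply (Rmult_lt_compat_r (2 * (Cmod z0 + 1))) in Hw; [|lra].
      rewrite Rinv_l in Hw by lra. exact Hw. }
    nra. }
  split; intro X.
  - replace (z0 * w)%C with (- (1))%C in Y by (replace (z0 * w)%C with ((1 + z0 * w) - 1)%C by ring; rewrite X; ring).
    rewrite Cmod_opp, Cmod_1 in Y. lra.
  - replace (z0 * w)%C with (RtoC 1) in Y by (replace (z0 * w)%C with (1 - (1 - z0 * w))%C by ring; rewrite X; ring).
    rewrite Cmod_1 in Y. lra.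
Qed.

Lemma Cinv_nz (w : C) : w <> 0%C -> (/ w)%C <> 0%C.
Proof.
  intros H X. assert (E : (w * / w)%C = RtoC 1) by (field; auto).
  rewrite X in E. apply (f_equal fst) in E. simpl in E. lra.
Qed.

Lemma T1 m eta G z0 f :
  (forall z, G z -> z <> z0) -> (exists R0, 0 <= R0 /\ forall z, R0 < Cmod z -> G z) ->
  (forall p, Gamma m eta p -> p <> z0) ->
  analytic_G_plus m eta G f ->
  exists fhat, analytic_Ghat_plus m eta z0 G fhat /\
    forall p, Gamma m eta p -> f p = (Psi z0 p * fhat (Psi z0 p))%C.
Proof.
  intros HGn [R0 [HR0 HR]] HGa [Hh [Hinf Hc]].
  unfold C_holo_at_infty in Hinf. apply holo_CD in Hinf. destruct Hinf as [lh Hlh].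
  set (h := fun w => if Ceq_dec w 0%C then RtoC 0 else f (/ w)%C) in Hlh.
  set (k := fun w => if Ceq_dec w 0%C then RtoC 0 else f (z0 + / w)%C).
  set (phi := fun w => (w * / (1 + z0 * w))%C).
  assert (Hphi0 : phi 0%C = 0%C) by (unfold phi; ring).
  set (rho := / (2 * (Cmod z0 + 1))).
  assert (Hrho : 0 < rho) by (unfold rho; apply Rinv_0_lt_compat; generalize (Cmod_ge_0 z0); lra).
  assert (Hden0 : (1 + z0 * 0)%C <> 0%C).
  { apply (proj1 (small_den z0 0%C ltac:(rewrite Cmod_0; exact Hrho))). }
  assert (Dphi : exists lp, CD phi 0%C lp).
  { eexists. apply (CD_mul (fun w => w) (fun w => / (1 + z0 * w))%C).
    - apply CD_id.
    - apply (CD_comp (fun u => / u)%C (fun w => 1 + z0 * w)%C).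
      + apply (CD_add (fun _ => RtoC 1) (fun w => z0 * w)%C). apply CD_const.
        apply (CD_mul (fun _ => z0) (fun w => w)). apply CD_const. apply CD_id.
      + apply CD_inv. auto. }
  destruct Dphi as [lp Dphi].
  assert (Dk0 : CD k 0%C (lh * lp)%C).
  { apply (CD_loc (fun w => h (phi w)) k 0%C _ rho Hrho).
    - intros w Hw. rewrite Csub0 in Hw. unfold k, h.
      destruct (Ceq_dec w 0%C) as [E|E].
      + subst. destruct (Ceq_dec (phi 0%C) 0%C) as [_|X]; [reflexivity| contradiction].
      + destruct (small_den z0 w Hw) as [D1 _].
        destruct (Ceq_dec (phi w) 0%C) as [X|X].
        * exfalso. unfold phi in X. apply (Cmult_neq_0 w (/ (1 + z0 * w))%C E (Cinv_nz _ D1)). exact X.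
        * f_equal. unfold phi. field. split; auto.
    - apply (CD_comp' h phi 0%C 0%C lh lp Dphi Hphi0 Hlh). }
  set (r := Rmin rho (/ (R0 + Cmod z0 + 1))).
  assert (Hr : 0 < r).
  { unfold r. apply Rmin_glb_lt; auto. apply Rinv_0_lt_compat. generalize (Cmod_ge_0 z0); lra. }
  assert (Dk : forall u, Cmod u < r -> exists l, CD k u l).
  { intros u Hu. destruct (Ceq_dec u 0%C) as [E|E].
    - subst. exists (lh * lp)%C. exact Dk0.
    - assert (Hu2 : Cmod u < / (R0 + Cmod z0 + 1)) by (eapply Rlt_le_trans; [exact Hu| apply Rmin_r]).
      assert (Pu : 0 < Cmod u) by (apply (proj1 (Cmod_gt_0 u)); exact E).
      assert (Gz : G (z0 + / u)%C).
      { apply HR. 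
        assert (T := Cmod_triangle (z0 + / u) (- z0)). replace (z0 + / u + - z0)%C with (/ u)%C in T by ring.
        rewrite Cmod_opp, Cmod_inv in T by auto.
        assert (/ Cmod u > R0 + Cmod z0 + 1).
        { apply (Rmult_lt_reg_r (Cmod u)); auto. rewrite Rinv_l by lra.
          apply (Rmult_lt_compat_r (R0 + Cmod z0 + 1)) in Hu2; [|generalize (Cmod_ge_0 z0); lra].
          rewrite Rinv_l in Hu2 by (generalize (Cmod_ge_0 z0); lra). lra. }
        lra. }
      destruct (proj1 (holo_CD _ _) (Hh _ Gz)) as [lf Hlf].
      eexists. apply (CD_loc (fun w => f (z0 + / w)%C) k u _ (Cmod u) Pu).
      + intros w Hw. unfold k. destruct (Ceq_dec w 0%C) as [X|X]; [|reflexivity].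
        subst. rewrite Cmod_minus_sym, Csub0 in Hw. lra.
      + apply (CD_comp f (fun w => z0 + / w)%C u _ _ (CD_rinv z0 u E) Hlf). }
  assert (k0 : k 0%C = 0%C) by (unfold k; destruct (Ceq_dec 0%C 0%C); [reflexivity| contradiction]).
  destruct (removable k r (lh * lp)%C Hr Dk k0 Dk0) as [L HL].
  set (fhat := fun w => if Ceq_dec w 0%C then (lh * lp)%C else (f (z0 + / w) / w)%C).
  assert (Eq : forall w, (if Ceq_dec w 0%C then (lh * lp)%C else (k w / w)%C) = fhat w).
  { intros w. unfold fhat, k. destruct (Ceq_dec w 0%C); reflexivity. }
  assert (Dfh0 : CD fhat 0%C L).
  { apply (CD_loc (fun u => if Ceq_dec u 0%C then (lh * lp)%C else (k u / u)%C) fhat 0%C L 1 Rlt_0_1); [intros; apply Eq| exact HL]. }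
  exists fhat. split; [split|].
  - intros w Hw. apply holo_CD. destruct Hw as [E|[z [Gz E]]].
    + subst. exists L. exact Dfh0.
    + assert (Hz := HGn z Gz). assert (Wn : w <> 0%C) by (rewrite E; apply Psi_nz; auto).
      assert (Pw : 0 < Cmod w) by (apply (proj1 (Cmod_gt_0 w)); exact Wn).
      destruct (proj1 (holo_CD _ _) (Hh _ Gz)) as [lf Hlf].
      eexists. apply (CD_loc (fun u => f (z0 + / u) * / u)%C fhat w _ (Cmod w) Pw).
      * intros u Hu. unfold fhat. destruct (Ceq_dec u 0%C) as [X|X]; [|reflexivity].
        subst. rewrite Cmod_minus_sym, Csub0 in Hu. lra.
      * apply (CD_mul (fun u => f (z0 + / u)%C) (fun u => / u)%C).
        -- apply (CD_comp' f (fun u => z0 + / u)%C w z lf _ (CD_rinv z0 w Wn)); [|exact Hlf].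
           rewrite E. apply Psi_inv; auto.
        -- apply CD_inv; auto.
  - intros p [q0 [Gq E]]. apply cont_from_CF.
    assert (Hq := HGa q0 Gq). assert (Pn : p <> 0%C) by (rewrite E; apply Psi_nz; auto).
    assert (Pp : 0 < Cmod p) by (apply (proj1 (Cmod_gt_0 p)); exact Pn).
    assert (Hrinv : (z0 + / p)%C = q0) by (rewrite E; apply Psi_inv; auto).
    assert (Hfp : fhat p = (f q0 * / p)%C).
    { unfold fhat. destruct (Ceq_dec p 0%C); [contradiction|]. rewrite Hrinv. reflexivity. }
    rewrite Hfp.
    apply (CF_loc _ (fun u => f (z0 + / u) * / u)%C fhat p _ (Cmod p) Pp).
    { intros u Hu _. unfold fhat. destruct (Ceq_dec u 0%C) as [X|X]; [|reflexivity].
      subst. rewrite Cmod_minus_sym, Csub0 in Hu. lra. }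
    apply (CF_mul _ (fun u => f (z0 + / u)%C) (fun u => / u)%C).
    + apply (CF_comp (Ghat z0 G) G f (fun u => z0 + / u)%C p q0 _ (Cmod p) Pp).
      * intros u Hu [X|[z [Gz X]]].
        -- subst. rewrite Cmod_minus_sym, Csub0 in Hu. lra.
        -- subst u. rewrite Psi_inv; auto.
      * rewrite <- Hrinv. apply (CF_of_Ccont _ (fun u => z0 + / u)%C p). apply Ccont_rinv; auto.
      * apply cont_from_CF. apply Hc. exact Gq.
    + apply (CF_of_Ccont _ (fun u => / u)%C p). apply Ccont_inv; auto.
  - intros p Gp. assert (Hp := HGa p Gp). assert (Pn := Psi_nz z0 p Hp).
    unfold fhat. destruct (Ceq_dec (Psi z0 p) 0%C); [contradiction|].
    rewrite Psi_inv by auto. field. auto.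
Qed.

Lemma T3 m eta G z0 g :
  Gminus m eta G z0 -> (forall p, Gamma m eta p -> p <> z0) ->
  analytic_G_minus m eta G g ->
  exists ghat, analytic_Ghat_minus m eta z0 G ghat /\
    forall p, Gamma m eta p -> g p = (Psi z0 p * ghat (Psi z0 p))%C.
Proof.
  intros Hz0 HGa [Hh Hc].
  set (ghat := fun w => (g (z0 + / w) * / w)%C).
  exists ghat. split; [split; [|split]|].
  - intros w [z [Gz [Hz E]]]. apply holo_CD.
    assert (Wn : w <> 0%C) by (rewrite E; apply Psi_nz; auto).
    destruct (proj1 (holo_CD _ _) (Hh _ Gz)) as [lg Hlg].
    eexists. apply (CD_mul (fun u => g (z0 + / u)%C) (fun u => / u)%C).
    + apply (CD_comp' g (fun u => z0 + / u)%C w z lg _ (CD_rinv z0 w Wn)); [|exact Hlg].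
      rewrite E. apply Psi_inv; auto.
    + apply CD_inv; auto.
  - unfold C_holo_at_infty. apply holo_CD.
    destruct (proj1 (holo_CD _ _) (Hh _ Hz0)) as [lg Hlg].
    assert (Dm : exists L, CD (fun w => g (z0 + w) * w)%C 0%C L).
    { eexists. apply (CD_mul (fun w => g (z0 + w)%C) (fun w => w)).
      - apply (CD_comp' g (fun w => z0 + w)%C 0%C z0 lg _ (CD_add (fun _ => z0) (fun w => w) 0%C _ _ (CD_const _ _) (CD_id _))); [ring| exact Hlg].
      - apply CD_id. }
    destruct Dm as [L Dm]. exists L.
    apply (CD_loc (fun w => g (z0 + w) * w)%C _ 0%C L 1 Rlt_0_1); [|exact Dm].
    intros w _. destruct (Ceq_dec w 0%C) as [E|E].
    + subst. ring.
    + unfold ghat. replace (/ / w)%C with w by (field; auto). reflexivity.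
  - intros p [q0 [Gq E]]. apply cont_from_CF.
    assert (Hq := HGa q0 Gq). assert (Pn : p <> 0%C) by (rewrite E; apply Psi_nz; auto).
    assert (Hrinv : (z0 + / p)%C = q0) by (rewrite E; apply Psi_inv; auto).
    unfold ghat. rewrite Hrinv.
    apply (CF_mul _ (fun u => g (z0 + / u)%C) (fun u => / u)%C).
    + apply (CF_comp (Gminushat m eta z0 G) (Gminus m eta G) g (fun u => z0 + / u)%C p q0 _ 1 Rlt_0_1).
      * intros u _ [z [Gz [Hz X]]]. subst u. rewrite Psi_inv; auto.
      * rewrite <- Hrinv. apply (CF_of_Ccont _ (fun u => z0 + / u)%C p). apply Ccont_rinv; auto.
      * apply cont_from_CF. apply Hc. exact Gq.
    + apply (CF_of_Ccont _ (fun u => / u)%C p). apply Ccont_inv; auto.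
  - intros p Gp. assert (Hp := HGa p Gp). assert (Pn := Psi_nz z0 p Hp).
    unfold ghat. rewrite Psi_inv by auto. field. auto.
Qed.

Lemma T4 m eta G z0 ghat :
  (exists r0, 0 < r0 /\ forall w, Cmod (w - z0) < r0 -> Gminus m eta G w) ->
  (forall p, Gamma m eta p -> p <> z0) ->
  analytic_Ghat_minus m eta z0 G ghat ->
  exists g, analytic_G_minus m eta G g /\
    forall p, Gamma m eta p -> g p = (Psi z0 p * ghat (Psi z0 p))%C.
Proof.
  intros [r0 [Hr0 Hball]] HGa [Hh [Hinf Hc]].
  unfold C_holo_at_infty in Hinf. apply holo_CD in Hinf. destruct Hinf as [lm Hlm].
  set (mm := fun u => if Ceq_dec u 0%C then RtoC 0 else ghat (/ u)%C) in Hlm.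
  assert (PsiS : forall u : C, u <> 0%C -> Psi z0 (z0 + u)%C = (/ u)%C).
  { intros u Hu. unfold Psi. f_equal. ring. }
  assert (Dk : forall u, Cmod u < r0 -> exists l, CD mm u l).
  { intros u Hu. destruct (Ceq_dec u 0%C) as [E|E].
    - subst. exists lm. exact Hlm.
    - assert (Pu : 0 < Cmod u) by (apply (proj1 (Cmod_gt_0 u)); exact E).
      assert (Gm : Gminushat m eta z0 G (/ u)%C).
      { exists (z0 + u)%C. split; [|split].
        - apply Hball. replace (z0 + u - z0)%C with u by ring. exact Hu.
        - intro X. apply E. replace u with ((z0 + u) - z0)%C by ring. rewrite X. ring.
        - symmetry. apply PsiS. auto. }
      destruct (proj1 (holo_CD _ _) (Hh _ Gm)) as [lg Hlg].
      eexists. apply (CD_loc (fun w => ghat (/ w)%C) mm u _ (Cmod u) Pu).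
      + intros w Hw. unfold mm. destruct (Ceq_dec w 0%C) as [X|X]; [|reflexivity].
        subst. rewrite Cmod_minus_sym, Csub0 in Hw. lra.
      + apply (CD_comp ghat (fun w => / w)%C u _ _ (CD_inv u E) Hlg). }
  assert (m0 : mm 0%C = 0%C) by (unfold mm; destruct (Ceq_dec 0%C 0%C); [reflexivity| contradiction]).
  destruct (removable mm r0 lm Hr0 Dk m0 Hlm) as [L HL].
  set (q := fun u => if Ceq_dec u 0%C then lm else (mm u / u)%C) in HL.
  set (g := fun z => if Ceq_dec z z0 then lm else (Psi z0 z * ghat (Psi z0 z))%C).
  assert (gq : forall w, g w = q (w - z0)%C).
  { intros w. unfold g, q, mm. destruct (Ceq_dec w z0) as [E|E].
    - subst. destruct (Ceq_dec (z0 - z0)%C 0%C) as [_|X]; [reflexivity|]. exfalso; apply X; ring.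
    - destruct (Ceq_dec (w - z0)%C 0%C) as [X|X].
      + exfalso. apply (sub_nz w z0 E X).
      + unfold Psi. unfold Cdiv. ring. }
  exists g. split; [split|].
  - intros z Gz. apply holo_CD. destruct (Ceq_dec z z0) as [E|E].
    + subst. exists (L * 1)%C.
      apply (CD_loc (fun w => q (w - z0)%C) g z0 _ 1 Rlt_0_1); [intros; symmetry; apply gq|].
      apply (CD_comp' q (fun w => w - z0)%C z0 0%C L _ (CD_shift z0 z0)); [ring| exact HL].
    + assert (Pz : 0 < Cmod (z - z0)) by (apply Cmod_pos_neq; auto).
      assert (Gm : Gminushat m eta z0 G (Psi z0 z)) by (exists z; auto).
      destruct (proj1 (holo_CD _ _) (Hh _ Gm)) as [lg Hlg].
      eexists. apply (CD_loc (fun w => Psi z0 w * ghat (Psi z0 w))%C g z _ (Cmod (z - z0)) Pz).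
      * intros w Hw. unfold g. destruct (Ceq_dec w z0) as [X|X]; [|reflexivity].
        subst. rewrite Cmod_minus_sym in Hw. lra.
      * apply (CD_mul (Psi z0) (fun w => ghat (Psi z0 w))).
        -- apply CD_Psi; auto.
        -- apply (CD_comp ghat (Psi z0) z _ _ (CD_Psi z0 z E) Hlg).
  - intros p Gp. apply cont_from_CF.
    assert (Hp := HGa p Gp).
    assert (Pz : 0 < Cmod (p - z0)) by (apply Cmod_pos_neq; auto).
    assert (gp : g p = (Psi z0 p * ghat (Psi z0 p))%C).
    { unfold g. destruct (Ceq_dec p z0); [contradiction| reflexivity]. }
    rewrite gp.
    apply (CF_loc _ (fun w => Psi z0 w * ghat (Psi z0 w))%C g p _ (Cmod (p - z0)) Pz).
    { intros w Hw _. unfold g. destruct (Ceq_dec w z0) as [X|X]; [|reflexivity].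
      subst. rewrite Cmod_minus_sym in Hw. lra. }
    apply (CF_mul _ (Psi z0) (fun w => ghat (Psi z0 w))).
    + apply CF_of_Ccont. apply Ccont_Psi; auto.
    + apply (CF_comp (Gminus m eta G) (Gminushat m eta z0 G) ghat (Psi z0) p (Psi z0 p) _ (Cmod (p - z0)) Pz).
      * intros w Hw Gw. exists w. split; [exact Gw| split; [|reflexivity]].
        intro X. subst. rewrite Cmod_minus_sym in Hw. lra.
      * apply CF_of_Ccont. apply Ccont_Psi; auto.
      * apply cont_from_CF. apply Hc. exists p. auto.
  - intros p Gp. assert (Hp := HGa p Gp). unfold g. destruct (Ceq_dec p z0); [contradiction| reflexivity].
Qed.

Lemma bd_eq (A : nat -> R -> C) z0 eta f fhat k s :
  f (eta k s) = (Psi z0 (eta k s) * fhat (Psi z0 (eta k s)))%C ->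
  Cmult (A k s) (f (eta k s)) = Cmult (Ahat z0 eta A k s) (fhat (zeta z0 eta k s)).
Proof. intros H. rewrite H. unfold Ahat, zeta. ring. Qed.

Lemma Gamma_pt m (eta : nat -> R -> C) k s : (k < m)%nat -> Gamma m eta (eta k s).
Proof. intros Hk. exists k. split; auto. exists s. reflexivity. Qed.

Theorem lemma4p2 (m : nat) (eta : nat -> R -> C) (G : C -> Prop)
  (A : nat -> R -> C) (z0 : C) :
  setting m eta G ->
  (* A : nonvanishing, 2pi-periodic, continuously differentiable on J *)
  (forall k, (k < m)%nat ->
     periodic2pi (A k) /\ C1_curve (A k) /\ forall s, A k s <> 0%C) ->
  (* z0 in G_m *)
  inside eta (m - 1)%nat z0 ->
  (forall gam, Rplushat_sp m eta G z0 A gam <-> Rplus_sp m eta G A gam) /\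
  (forall gam, Splushat_sp m eta G z0 A gam <-> Splus_sp m eta G A gam) /\
  (forall gam, Rminushat_sp m eta G z0 A gam <-> Rminus_sp m eta G A gam) /\
  (forall gam, Sminushat_sp m eta G z0 A gam <-> Sminus_sp m eta G A gam).
Proof.
  intros HS _ Hz0.
  assert (HGn := G_neq m eta G z0 HS Hz0).
  assert (HGa := Gamma_neq m eta G z0 HS Hz0).
  assert (Hfar := G_far m eta G HS).
  assert (Hball := z0_ball m eta G z0 HS Hz0).
  assert (Hzm := z0_Gminus m eta G z0 HS Hz0).
  split; [|split; [|split]]; intros gam; split.
  - intros [HH [fhat [Hf Hb]]]. split; auto.
    exists (fun z => Psi z0 z * fhat (Psi z0 z))%C. split; [apply T2; auto|].
    intros k s Hk. rewrite Hb by auto. f_equal. symmetry. apply (bd_eq A z0 eta (fun z => Psi z0 z * fhat (Psi z0 z))%C fhat k s). reflexivity.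
  - intros [HH [f [Hf Hb]]]. split; auto.
    destruct (T1 m eta G z0 f HGn Hfar HGa Hf) as [fhat [Hfh Hid]].
    exists fhat. split; auto.
    intros k s Hk. rewrite Hb by auto. f_equal. apply (bd_eq A z0 eta f fhat k s). apply Hid. apply Gamma_pt; auto.
  - intros [HH [fhat [Hf Hb]]]. split; auto.
    exists (fun z => Psi z0 z * fhat (Psi z0 z))%C. split; [apply T2; auto|].
    intros k s Hk. rewrite Hb by auto. symmetry. apply (bd_eq A z0 eta (fun z => Psi z0 z * fhat (Psi z0 z))%C fhat k s). reflexivity.
  - intros [HH [f [Hf Hb]]]. split; auto.
    destruct (T1 m eta G z0 f HGn Hfar HGa Hf) as [fhat [Hfh Hid]].
    exists fhat. split; auto.
    intros k s Hk. rewrite Hb by auto. apply (bd_eq A z0 eta f fhat k s). apply Hid. apply Gamma_pt; auto.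
  - intros [HH [ghat [Hg Hb]]]. split; auto.
    destruct (T4 m eta G z0 ghat Hball HGa Hg) as [g [Hg2 Hid]].
    exists g. split; auto.
    intros k s Hk. rewrite Hb by auto. f_equal. symmetry. apply (bd_eq A z0 eta g ghat k s). apply Hid. apply Gamma_pt; auto.
  - intros [HH [g [Hg Hb]]]. split; auto.
    destruct (T3 m eta G z0 g Hzm HGa Hg) as [ghat [Hgh Hid]].
    exists ghat. split; auto.
    intros k s Hk. rewrite Hb by auto. f_equal. apply (bd_eq A z0 eta g ghat k s). apply Hid. apply Gamma_pt; auto.
  - intros [HH [ghat [Hg Hb]]]. split; auto.
    destruct (T4 m eta G z0 ghat Hball HGa Hg) as [g [Hg2 Hid]].
    exists g. split; auto.
    intros k s Hk. rewrite Hb by auto. symmetry. apply (bd_eq A z0 eta g ghat k s). apply Hid. apply Gamma_pt; auto.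
  - intros [HH [g [Hg Hb]]]. split; auto.
    destruct (T3 m eta G z0 g Hzm HGa Hg) as [ghat [Hgh Hid]].
    exists ghat. split; auto.
    intros k s Hk. rewrite Hb by auto. apply (bd_eq A z0 eta g ghat k s). apply Hid. apply Gamma_pt; auto.
Qed.
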